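(* Fix $T>0$ and $\rho\in[0,T)$. Let $\xi\in C([\rho,T];PC^{(2),1}[0,1])$ satisfy $\alpha_0\xi_x(0,t)+\beta_0\xi(0,t)=0$ for all $t\in[\rho,T]$, and set $f_\xi(t)=\alpha_1\xi_x(1,t)+\beta_1\xi(1,t)$. Assume that for every $t\in[\rho,T]$ the set of points at which $\xi_{xx}(\cdot,t)$ is not differentiable is a subset of $\mathcal I$. Then there exists $C>0$ independent of $\xi$ and $n$ such that for all sufficiently large $n$, $$\sup_{t\in[\rho,T]}\big\|R_n\mathscr P\xi(\cdot,t)-P_nR_n\xi(\cdot,t)-B_nf_\xi(t)\big\|_{2d}\le C\sqrt h\sup_{t\in[\rho,T]}\|\xi(\cdot,t)\|_{PC^{(2),1}[0,1]},$$ where $h=1/(n+1)$.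
   Context: A function $\psi:[0,1]\to\mathbb R$ belongs to $PC^k[0,1]$ if there is a finite partition of $[0,1]$ into disjoint intervals such that on each of them $\psi$ is the restriction of some $C^k[0,1]$ function; $\|\psi\|_{PC^k[0,1]}$ is the supremum of $\|\psi\|_{C^k[a,b]}$ over all intervals $[a,b]\subset[0,1]$ on which $\psi$ is $k$ times continuously differentiable; $PC[0,1]=PC^0[0,1]$. $PC^{(2),1}[0,1]$ is the set of $\psi\in C^1[0,1]\cap H^2(0,1)$ with $\psi_{xx}\in PC^1[0,1]$, with norm $\|\psi\|_{PC^{(2),1}[0,1]}=\|\psi\|_{C^1[0,1]}+\|\psi_{xx}\|_{PC^1[0,1]}$. Standing assumptions: $\theta,\sigma,\lambda\in PC^1[0,1]$ with $\inf_{x\in[0,1]}\theta(x)>0$; $\varphi\in C^1([0,1];C^1[0,1])$ is a kernel $\varphi(x,\tilde x)$; $\alpha_0,\beta_0,\alpha_1,\beta_1$ are real constants. $\mathcal I$ is the set of all points of $[0,1]$ at which at least one of $\theta,\sigma,\lambda$ is not differentiable. For $w\in H^2(0,1)$, $\mathscr Pw(x)=\theta(x)w_{xx}(x)+\sigma(x)w_x(x)+\lambda(x)w(x)+\int_0^x\varphi(x,\tilde x)w(\tilde x)d\tilde x$. Discretization: for $n\ge1$ let $h=1/(n+1)$, $r_0=\alpha_0/(3\alpha_0-2h\beta_0)$, $r_1=\alpha_1/(3\alpha_1+2h\beta_1)$, $q_0=-\beta_0/(\alpha_0-h\beta_0)$, $b_n=2h\theta(nh)/(3\alpha_1+2h\beta_1)$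 (assumed well defined for all $n$). Define $n\times n$ matrices $\Theta_n=\mathrm{diag}(\theta(h),\dots,\theta(nh))$, $\Sigma_n=\mathrm{diag}(\sigma(h),\dots,\sigma(nh))$, $\Lambda_n=\mathrm{diag}(\lambda(h),\dots,\lambda(nh))$; $L_n=h^{-2}M$ where $M$ is tridiagonal with diagonal entries $-2$ except $M_{11}=4r_0-2$, $M_{nn}=4r_1-2$, superdiagonal entries $1$ except $M_{12}=1-r_0$, subdiagonal entries $1$ except $M_{n,n-1}=1-r_1$; $D_n=h^{-1}N$ where $N_{11}=hq_0$, $N_{1j}=0$ for $j\ge2$, and for $i\ge2$: $N_{ii}=1$, $N_{i,i-1}=-1$, other entries $0$; $\Phi_n$ is lower triangular with $(\Phi_n)_{jm}=h\varphi(jh,mh)$ for $m\le j$. Set $P_n=\Theta_nL_n+\Sigma_nD_n+\Lambda_n+\Phi_n$ and $B_n=h^{-2}(0,\dots,0,b_n)^\top\in\mathbb R^n$. For $v\in\mathbb R^n$, $\|v\|_{2d}=\sqrt h\,\|v\|_2$ (Euclidean norm). For $z\in PC[0,1]$, $R_nz=(z(h),z(2h),\dots,z(nh))^\top$. *)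

(* Defs.v *)
From Stdlib Require Import Reals.
From Coquelicot Require Import Coquelicot.
Open Scope R_scope.

Definition is_deriv01 (f : R -> R) (x l : R) : Prop :=
  forall eps, 0 < eps -> exists delta, 0 < delta /\
    forall y, 0 <= y <= 1 -> y <> x -> Rabs (y - x) < delta ->
      Rabs ((f y - f x) / (y - x) - l) < eps.

Definition diff01 (f : R -> R) (x : R) : Prop := exists l, is_deriv01 f x l.

Definition continuous01 (f : R -> R) (x : R) : Prop :=
  forall eps, 0 < eps -> exists delta, 0 < delta /\
    forall y, 0 <= y <= 1 -> Rabs (y - x) < delta -> Rabs (f y - f x) < eps.

(* g is of class C^k on the whole real line (every C^k[a,b] function
   extends to such a g, so "restriction of a C^k[a,b] function" is
   expressed as "agrees on [a,b] with a C^k(R) function") *)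
Definition Ck (k : nat) (g : R -> R) : Prop :=
  (forall j x, (j <= k)%nat -> ex_derive_n g j x) /\
  (forall x, continuous (Derive_n g k) x).

(* PC^k[0,1]: a partition 0 = x_0 < x_1 < ... < x_m = 1 of [0,1] into
   disjoint nondegenerate intervals, each breakpoint belonging to one of the
   two adjacent intervals; on each interval psi is the restriction of a C^k
   function. *)
Definition PCk (k : nat) (psi : R -> R) : Prop :=
  exists (m : nat) (x : nat -> R) (g : nat -> R -> R),
    (1 <= m)%nat /\ x 0%nat = 0 /\ x m = 1 /\
    (forall i, (i < m)%nat -> x i < x (S i)) /\
    (forall i, (i < m)%nat -> Ck k (g i)) /\
    (forall i y, (i < m)%nat -> x i < y < x (S i) -> psi y = g i y) /\
    psi 0 = g 0%nat 0 /\ psi 1 = g (pred m) 1 /\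
    (forall i, (0 < i < m)%nat ->
       psi (x i) = g (pred i) (x i) \/ psi (x i) = g i (x i)).

Definition supOn (a b : R) (f : R -> R) : Rbar :=
  Lub_Rbar (fun v => exists y, a <= y <= b /\ v = Rabs (f y)).

Fixpoint Ck_norm_on (k : nat) (g : R -> R) (a b : R) : Rbar :=
  match k with
  | O => supOn a b g
  | S k' => Rbar_plus (Ck_norm_on k' g a b) (supOn a b (Derive_n g k))
  end.

Definition PCk_norm (k : nat) (psi : R -> R) : Rbar :=
  Rbar_lub (fun v => exists a b g, 0 <= a < b /\ b <= 1 /\ Ck k g /\
              (forall y, a <= y <= b -> psi y = g y) /\
              v = Ck_norm_on k g a b).

(* psi in PC^{(2),1}[0,1] with psi_x = psi1 and psi_xx = psi2:
   psi in C^1[0,1] with derivative psi1, psi1 absolutely continuous with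
   (weak) derivative psi2 (so psi in H^2), and psi2 in PC^1[0,1]. *)
Definition PC21 (psi psi1 psi2 : R -> R) : Prop :=
  (forall x, 0 <= x <= 1 -> is_deriv01 psi x (psi1 x)) /\
  (forall x, 0 <= x <= 1 -> continuous01 psi1 x) /\
  PCk 1 psi2 /\
  (forall x, 0 <= x <= 1 -> psi1 x = psi1 0 + RInt psi2 0 x).

Definition PC21_norm (psi psi1 psi2 : R -> R) : Rbar :=
  Rbar_plus (Rbar_plus (supOn 0 1 psi) (supOn 0 1 psi1)) (PCk_norm 1 psi2).

Definition cont_PC21 (rho T : R) (xi xix xixx : R -> R -> R) : Prop :=
  forall t0, rho <= t0 <= T -> forall eps, 0 < eps -> exists delta, 0 < delta /\
    forall t, rho <= t <= T -> Rabs (t - t0) < delta ->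
      Rbar_lt (PC21_norm (fun x => xi x t - xi x t0)
                         (fun x => xix x t - xix x t0)
                         (fun x => xixx x t - xixx x t0)) eps.

(* phi in C^1([0,1]; C^1[0,1]), written with explicit partial derivatives:
   phi2 = d phi/d xt, phi1 = d phi/d x, phi12 = d phi1 / d xt; the
   derivative of x |-> phi(x,.) is taken in the C^1[0,1] norm (here the
   equivalent max-norm max(sup|f|, sup|f'|)) and is continuous in it. *)
Definition kernel_C1 (phi : R -> R -> R) : Prop :=
  exists phi1 phi2 phi12 : R -> R -> R,
    (forall x, 0 <= x <= 1 -> forall s, 0 <= s <= 1 ->
        is_deriv01 (phi x) s (phi2 x s) /\ continuous01 (phi2 x) s /\
        is_deriv01 (phi1 x) s (phi12 x s) /\ continuous01 (phi12 x) s) /\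
    (forall x, 0 <= x <= 1 -> forall eps, 0 < eps -> exists delta, 0 < delta /\
       forall y, 0 <= y <= 1 -> y <> x -> Rabs (y - x) < delta ->
       forall s, 0 <= s <= 1 ->
         Rabs ((phi y s - phi x s) / (y - x) - phi1 x s) <= eps /\
         Rabs ((phi2 y s - phi2 x s) / (y - x) - phi12 x s) <= eps) /\
    (forall x, 0 <= x <= 1 -> forall eps, 0 < eps -> exists delta, 0 < delta /\
       forall y, 0 <= y <= 1 -> Rabs (y - x) < delta ->
       forall s, 0 <= s <= 1 ->
         Rabs (phi1 y s - phi1 x s) <= eps /\
         Rabs (phi12 y s - phi12 x s) <= eps).

Definition inI (theta sigma lambda : R -> R) (x : R) : Prop :=
  0 <= x <= 1 /\ (~ diff01 theta x \/ ~ diff01 sigma x \/ ~ diff01 lambda x).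

Definition Pop (theta sigma lambda : R -> R) (phi : R -> R -> R)
  (w w1 w2 : R -> R) (x : R) : R :=
  theta x * w2 x + sigma x * w1 x + lambda x * w x
  + RInt (fun y => phi x y * w y) 0 x.

(* ---------- discretization (vectors/matrices indexed from 1 to n) ---------- *)

Definition hstep (n : nat) : R := / INR (S n).

Definition r0 (a0 b0 : R) (n : nat) : R := a0 / (3 * a0 - 2 * hstep n * b0).
Definition r1 (a1 b1 : R) (n : nat) : R := a1 / (3 * a1 + 2 * hstep n * b1).
Definition q0 (a0 b0 : R) (n : nat) : R := - b0 / (a0 - hstep n * b0).
Definition bn (theta : R -> R) (a1 b1 : R) (n : nat) : R :=
  2 * hstep n * theta (INR n * hstep n) / (3 * a1 + 2 * hstep n * b1).

Definition Mentry (a0 b0 a1 b1 : R) (n i j : nat) : R :=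
  if Nat.eqb i j then
    (if Nat.eqb i 1 then 4 * r0 a0 b0 n - 2
     else if Nat.eqb i n then 4 * r1 a1 b1 n - 2 else -2)
  else if Nat.eqb j (S i) then
    (if Nat.eqb i 1 then 1 - r0 a0 b0 n else 1)
  else if Nat.eqb i (S j) then
    (if Nat.eqb i n then 1 - r1 a1 b1 n else 1)
  else 0.

Definition Lentry (a0 b0 a1 b1 : R) (n i j : nat) : R :=
  Mentry a0 b0 a1 b1 n i j / (hstep n ^ 2).

Definition Nentry (a0 b0 : R) (n i j : nat) : R :=
  if Nat.eqb i 1 then (if Nat.eqb j 1 then hstep n * q0 a0 b0 n else 0)
  else if Nat.eqb j i then 1
  else if Nat.eqb i (S j) then -1
  else 0.

Definition Dentry (a0 b0 : R) (n i j : nat) : R := Nentry a0 b0 n i j / hstep n.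

Definition Phientry (phi : R -> R -> R) (n i j : nat) : R :=
  if Nat.leb j i then hstep n * phi (INR i * hstep n) (INR j * hstep n) else 0.

Definition deltaR (i j : nat) : R := if Nat.eqb i j then 1 else 0.

Definition Pentry (theta sigma lambda : R -> R) (phi : R -> R -> R)
  (a0 b0 a1 b1 : R) (n i j : nat) : R :=
  let xi := INR i * hstep n in
  theta xi * Lentry a0 b0 a1 b1 n i j + sigma xi * Dentry a0 b0 n i j
  + lambda xi * deltaR i j + Phientry phi n i j.

Definition Pn_apply (theta sigma lambda : R -> R) (phi : R -> R -> R)
  (a0 b0 a1 b1 : R) (n : nat) (v : nat -> R) (i : nat) : R :=
  sum_n_m (fun j => Pentry theta sigma lambda phi a0 b0 a1 b1 n i j * v j) 1 n.

Definition Bn (theta : R -> R) (a1 b1 : R) (n i : nat) : R :=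
  if Nat.eqb i n then bn theta a1 b1 n / (hstep n ^ 2) else 0.

Definition Rsample (n : nat) (z : R -> R) (i : nat) : R := z (INR i * hstep n).

Definition norm2d (n : nat) (v : nat -> R) : R :=
  sqrt (hstep n) * sqrt (sum_n_m (fun i => v i ^ 2) 1 n).

(* Main.v *)
Require Import Defs.
From Stdlib Require Import Reals Lra Lia ZArith Classical ClassicalEpsilon.
From Coquelicot Require Import Coquelicot.
Open Scope R_scope.


Lemma le_eps (x y : R) : (forall eps, 0 < eps -> x <= y + eps) -> x <= y.
Proof.
  intros H. destruct (Rle_dec x y) as [h|h]; auto.
  assert (H1 := H ((x - y)/2) ltac:(lra)). lra.
Qed.

Lemma deriv01_cont (f : R -> R) x l : is_deriv01 f x l -> continuous01 f x.
Proof.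
  intros H eps Heps.
  destruct (H 1 Rlt_0_1) as [d [Hd Hq]].
  exists (Rmin d (eps / (Rabs l + 1))). split.
  { apply Rmin_pos; auto. apply Rdiv_lt_0_compat; auto. pose proof (Rabs_pos l); lra. }
  intros y Hy Hyx.
  destruct (Req_dec y x) as [e|ne].
  { subst. rewrite Rminus_diag, Rabs_R0. auto. }
  assert (Hyx1 : Rabs (y - x) < d) by (eapply Rlt_le_trans; [exact Hyx| apply Rmin_l]).
  assert (Hyx2 : Rabs (y - x) < eps / (Rabs l + 1)) by (eapply Rlt_le_trans; [exact Hyx| apply Rmin_r]).
  specialize (Hq y Hy ne Hyx1).
  assert (hne : y - x <> 0) by lra.
  replace (f y - f x) with (((f y - f x)/(y - x) - l) * (y - x) + l * (y - x)) by (field; auto).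
  assert (Rabs ((f y - f x) / (y - x) - l) <= 1) by lra.
  eapply Rle_lt_trans. apply Rabs_triang.
  rewrite !Rabs_mult.
  assert (HA : 0 < Rabs l + 1) by (pose proof (Rabs_pos l); lra).
  assert (Rabs (y - x) * (Rabs l + 1) < eps).
  { apply (Rmult_lt_compat_r (Rabs l + 1)) in Hyx2; auto.
    unfold Rdiv in Hyx2. rewrite Rmult_assoc, Rinv_l in Hyx2; lra. }
  pose proof (Rabs_pos (y - x)). pose proof (Rabs_pos l).
  pose proof (Rabs_pos ((f y - f x) / (y - x) - l)).
  nra.
Qed.

Lemma deriv01_is_derive f x l : 0 < x < 1 -> is_deriv01 f x l -> is_derive f x l.
Proof.
  intros Hx H. apply is_derive_Reals. intros eps Heps.
  destruct (H eps Heps) as [d [Hd Hq]].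
  assert (Hp : 0 < Rmin d (Rmin x (1 - x))).
  { repeat apply Rmin_pos; lra. }
  exists (mkposreal _ Hp). intros h hne hlt. simpl in hlt.
  assert (h1 : Rabs h < d) by (eapply Rlt_le_trans; [exact hlt|apply Rmin_l]).
  assert (h2 : Rabs h < Rmin x (1-x)) by (eapply Rlt_le_trans; [exact hlt|apply Rmin_r]).
  assert (h3 : Rabs h < x) by (eapply Rlt_le_trans; [exact h2|apply Rmin_l]).
  assert (h4 : Rabs h < 1 - x) by (eapply Rlt_le_trans; [exact h2|apply Rmin_r]).
  assert (Hy : 0 <= x + h <= 1) by (apply Rabs_def2 in h3; apply Rabs_def2 in h4; lra).
  specialize (Hq (x + h) Hy ltac:(lra)).
  replace (x + h - x) with h in Hq by ring. auto.
Qed.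

Lemma is_derive_deriv01 f x l : is_derive f x l -> is_deriv01 f x l.
Proof.
  intros H. apply is_derive_Reals in H. intros eps Heps.
  destruct (H eps Heps) as [d Hd]. exists d. split. apply cond_pos.
  intros y Hy ne hlt. specialize (Hd (y - x) ltac:(lra) hlt).
  replace (x + (y - x)) with y in Hd by ring. auto.
Qed.

Lemma deriv01_minus f g x a b : is_deriv01 f x a -> is_deriv01 g x b ->
  is_deriv01 (fun y => f y - g y) x (a - b).
Proof.
  intros Hf Hg eps Heps.
  destruct (Hf (eps/2) ltac:(lra)) as [d1 [Hd1 H1]].
  destruct (Hg (eps/2) ltac:(lra)) as [d2 [Hd2 H2]].
  exists (Rmin d1 d2). split. apply Rmin_pos; auto.
  intros y Hy ne hlt.
  assert (Rabs (y - x) < d1) by (eapply Rlt_le_trans; [exact hlt|apply Rmin_l]).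
  assert (Rabs (y - x) < d2) by (eapply Rlt_le_trans; [exact hlt|apply Rmin_r]).
  specialize (H1 y Hy ne ltac:(auto)). specialize (H2 y Hy ne ltac:(auto)).
  assert (hne : y - x <> 0) by lra.
  replace ((f y - g y - (f x - g x)) / (y - x) - (a - b)) with
    (((f y - f x)/(y-x) - a) - ((g y - g x)/(y-x) - b)) by (field; auto).
  eapply Rle_lt_trans. apply Rabs_triang. rewrite Rabs_Ropp. lra.
Qed.

Lemma DB_interior f df a b K : 0 < a -> a <= b -> b < 1 ->
  (forall u, a <= u <= b -> is_deriv01 f u (df u)) ->
  (forall u, a <= u <= b -> Rabs (df u) <= K) ->
  Rabs (f b - f a) <= K * (b - a).
Proof.
  intros Ha Hab Hb Hd HK.
  destruct (Req_dec a b) as [e|ne].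
  { subst. rewrite Rminus_diag, Rabs_R0. lra. }
  destruct (MVT_gen f a b df) as [c [Hc Heq]].
  - intros x Hx. rewrite Rmin_left, Rmax_right in Hx by lra.
    apply deriv01_is_derive. lra. apply Hd. lra.
  - intros x Hx. rewrite Rmin_left, Rmax_right in Hx by lra.
    apply derivable_continuous_pt. exists (df x).
    apply is_derive_Reals. apply deriv01_is_derive. lra. apply Hd. lra.
  - rewrite Rmin_left, Rmax_right in Hc by lra.
    rewrite Heq. rewrite Rabs_mult. rewrite (Rabs_right (b - a)) by lra.
    apply Rmult_le_compat_r. lra. apply HK. lra.
Qed.

Lemma DB f df a b K : 0 <= a -> a <= b -> b <= 1 ->
  (forall u, a <= u <= b -> is_deriv01 f u (df u)) ->
  (forall u, a <= u <= b -> Rabs (df u) <= K) ->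
  Rabs (f b - f a) <= K * (b - a).
Proof.
  intros Ha Hab Hb Hd HK.
  destruct (Req_dec a b) as [e|ne].
  { subst. rewrite Rminus_diag, Rabs_R0. lra. }
  assert (HK0 : 0 <= K) by (eapply Rle_trans; [apply Rabs_pos| apply (HK a); lra]).
  apply le_eps. intros eps Heps.
  destruct (deriv01_cont f a (df a) (Hd a ltac:(lra)) (eps/2) ltac:(lra)) as [da [Hda Ca]].
  destruct (deriv01_cont f b (df b) (Hd b ltac:(lra)) (eps/2) ltac:(lra)) as [db [Hdb Cb]].
  set (t := Rmin (Rmin da db) ((b - a)/3) / 2).
  assert (Ht : 0 < t).
  { unfold t. apply Rdiv_lt_0_compat; [|lra]. repeat apply Rmin_pos; lra. }
  assert (Ht1 : t < da) by (unfold t; pose proof (Rmin_l (Rmin da db) ((b-a)/3)); pose proof (Rmin_l da db); lra).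
  assert (Ht2 : t < db) by (unfold t; pose proof (Rmin_l (Rmin da db) ((b-a)/3)); pose proof (Rmin_r da db); lra).
  assert (Ht3 : t <= (b - a)/6) by (unfold t; pose proof (Rmin_r (Rmin da db) ((b-a)/3)); lra).
  assert (E1 := DB_interior f df (a + t) (b - t) K ltac:(lra) ltac:(lra) ltac:(lra)
     ltac:(intros; apply Hd; lra) ltac:(intros; apply HK; lra)).
  assert (E2 := Ca (a + t) ltac:(lra) ltac:(rewrite Rabs_right by lra; lra)).
  assert (E3 := Cb (b - t) ltac:(lra) ltac:(rewrite Rabs_left by lra; lra)).
  replace (f b - f a) with ((f (b - t) - f (a + t)) - (f (b - t) - f b) + (f (a + t) - f a)) by ring.
  eapply Rle_trans. apply Rabs_triang. eapply Rle_trans. apply Rplus_le_compat_r. apply Rabs_triang.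
  rewrite Rabs_Ropp.
  assert (K * (b - t - (a + t)) <= K * (b - a)) by (apply Rmult_le_compat_l; lra).
  lra.
Qed.

Lemma DB_abs f df a b c K : 0 <= a -> a <= b -> b <= 1 ->
  (forall u, a <= u <= b -> is_deriv01 f u (df u)) ->
  (forall u, a <= u <= b -> Rabs (df u) <= K) ->
  a <= c <= b -> forall u, a <= u <= b -> Rabs (f u - f c) <= K * Rabs (u - c).
Proof.
  intros Ha Hab Hb Hd HK Hc u Hu.
  destruct (Rle_dec c u).
  - rewrite (Rabs_right (u - c)) by lra. apply (DB _ df); try lra.
    1,2: intros; first [apply Hd|apply HK]; lra.
  - rewrite (Rabs_left (u - c)) by lra. rewrite <- Rabs_Ropp. replace (- (f u - f c)) with (f c - f u) by ring.
    replace (- (u - c)) with (c - u) by ring. apply (DB _ df); try lra.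
    1,2: intros; first [apply Hd|apply HK]; lra.
Qed.


Lemma sum0 (a : nat -> R) : sum_n_m a 1 0 = 0.
Proof. rewrite sum_n_m_zero by lia. reflexivity. Qed.

Lemma sumS (a : nat -> R) n : sum_n_m a 1 (S n) = sum_n_m a 1 n + a (S n).
Proof. rewrite sum_n_Sm by lia. reflexivity. Qed.

Lemma sum_plusR (u v : nat -> R) n m :
  sum_n_m (fun k => u k + v k) n m = sum_n_m u n m + sum_n_m v n m.
Proof. apply (sum_n_m_plus u v). Qed.

Lemma sum_multR (c : R) (u : nat -> R) n m :
  sum_n_m (fun k => c * u k) n m = c * sum_n_m u n m.
Proof. apply (sum_n_m_mult_l c u). Qed.

Lemma sum_ext1 (a b : nat -> R) n :
  (forall k, (1 <= k <= n)%nat -> a k = b k) -> sum_n_m a 1 n = sum_n_m b 1 n.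
Proof. intros H. apply sum_n_m_ext_loc. auto. Qed.

Lemma sum_le1 (a b : nat -> R) n :
  (forall k, (1 <= k <= n)%nat -> a k <= b k) -> sum_n_m a 1 n <= sum_n_m b 1 n.
Proof.
  intros H. induction n. rewrite !sum0; lra.
  rewrite !sumS. apply Rplus_le_compat. apply IHn; intros; apply H; lia. apply H; lia.
Qed.

Lemma sum_const1 (c : R) n : @eq R (sum_n_m (fun _ => c) 1 n) (INR n * c).
Proof.
  induction n. rewrite sum0; simpl; lra. rewrite sumS, IHn. rewrite (S_INR n). change (INR n * c + c = (INR n + 1) * c); ring.
Qed.

Lemma sum_triang1 (a : nat -> R) n : Rabs (sum_n_m a 1 n) <= sum_n_m (fun k => Rabs (a k)) 1 n.
Proof.
  induction n. rewrite !sum0, Rabs_R0; lra.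
  rewrite !sumS. eapply Rle_trans. apply Rabs_triang. lra.
Qed.

Lemma sum_tele (a : nat -> R) n : @eq R (sum_n_m (fun k => a k - a (k - 1)%nat) 1 n) (a n - a 0%nat).
Proof.
  induction n. rewrite sum0; lra. rewrite sumS, IHn. replace (S n - 1)%nat with n by lia. ring.
Qed.

Lemma sum_delta (a : nat) (y : R) n : (1 <= a)%nat ->
  ((n < a)%nat -> sum_n_m (fun j => if Nat.eqb j a then y else 0) 1 n = 0) /\
  ((a <= n)%nat -> sum_n_m (fun j => if Nat.eqb j a then y else 0) 1 n = y).
Proof.
  intros Ha. induction n.
  - split; intros; [rewrite sum0; auto | lia].
  - destruct IHn as [I1 I2]. rewrite sumS. split; intros H.
    + rewrite I1 by lia. destruct (Nat.eqb_spec (S n) a); [lia|]. lra.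
    + destruct (Nat.eqb_spec (S n) a).
      * rewrite I1 by lia. lra.
      * rewrite I2 by lia. lra.
Qed.

Lemma sum_delta_in a y n : (1 <= a <= n)%nat ->
  sum_n_m (fun j => if Nat.eqb j a then y else 0) 1 n = y.
Proof. intros H. apply (sum_delta a y n); lia. Qed.

Lemma sum_delta_le a n : sum_n_m (fun j => if Nat.eqb j a then 1 else 0) 1 n <= 1.
Proof.
  destruct a.
  - rewrite (sum_ext1 _ (fun _ => 0)). rewrite sum_const1. lra.
    intros k Hk. destruct (Nat.eqb_spec k 0); [lia|auto].
  - destruct (Compare_dec.le_lt_dec (S a) n).
    + rewrite (proj2 (sum_delta (S a) 1 n ltac:(lia))); lia || lra.
    + rewrite (proj1 (sum_delta (S a) 1 n ltac:(lia))); lia || lra.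
Qed.

Lemma sum_nonneg1 (a : nat -> R) n : (forall k, (1 <= k <= n)%nat -> 0 <= a k) -> 0 <= sum_n_m a 1 n.
Proof.
  intros H. induction n. rewrite sum0; lra.
  rewrite sumS. assert (0 <= a (S n)) by (apply H; lia).
  assert (0 <= sum_n_m a 1 n) by (apply IHn; intros; apply H; lia). lra.
Qed.


Lemma part_mono (m : nat) (x : nat -> R) :
  (forall i, (i < m)%nat -> x i < x (S i)) ->
  forall i j, (i <= j <= m)%nat -> x i <= x j.
Proof.
  intros H i j Hij. induction j.
  - replace i with 0%nat by lia. lra.
  - destruct (Nat.eq_dec i (S j)). subst; lra.
    assert (x i <= x j) by (apply IHj; lia). assert (x j < x (S j)) by (apply H; lia). lra.
Qed.

Lemma part_locate (m : nat) (x : nat -> R) :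
  (forall i, (i < m)%nat -> x i < x (S i)) ->
  forall u, x 0%nat <= u <= x m ->
  (exists k, (k <= m)%nat /\ u = x k) \/ (exists k, (k < m)%nat /\ x k < u < x (S k)).
Proof.
  intros H. induction m; intros u Hu.
  - left. exists 0%nat. split; [lia|lra].
  - destruct (Rle_dec u (x m)).
    + assert (x 0%nat <= x m) by (apply (part_mono (S m)); auto; lia).
      destruct (IHm ltac:(intros; apply H; lia) u ltac:(lra)) as [[k [Hk E]]|[k [Hk E]]].
      * left. exists k. split; [lia|auto].
      * right. exists k. split; [lia|auto].
    + destruct (Req_dec u (x (S m))).
      * left. exists (S m). split; [lia|auto].
      * right. exists m. split; [lia|lra].
Qed.

Lemma Ck1_cont g : Ck 1 g -> forall y, continuous g y.
Proof.
  intros [H1 H2] y. exact (@ex_derive_continuous R_AbsRing R_NormedModule g y (H1 1%nat y (le_n 1))).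
Qed.

Lemma Ck1_ex_derive g : Ck 1 g -> forall y, ex_derive g y.
Proof. intros [H1 H2] y. exact (H1 1%nat y (le_n 1)). Qed.

Lemma cont_pt g y : continuous g y -> continuity_pt g y.
Proof. intros H. apply continuity_pt_filterlim. exact H. Qed.

Lemma cont_bounded g a b : a <= b -> (forall y, continuous g y) ->
  exists B, forall y, a <= y <= b -> Rabs (g y) <= B.
Proof.
  intros Hab Hc.
  destruct (continuity_ab_maj g a b Hab (fun c _ => cont_pt g c (Hc c))) as [M1 [HM1 _]].
  destruct (continuity_ab_min g a b Hab (fun c _ => cont_pt g c (Hc c))) as [M2 [HM2 _]].
  exists (Rabs (g M1) + Rabs (g M2)). intros y Hy.
  specialize (HM1 y Hy). specialize (HM2 y Hy).
  pose proof (Rabs_pos (g M1)). pose proof (Rabs_pos (g M2)).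
  unfold Rabs at 1. destruct (Rcase_abs (g y)).
  - pose proof (Rle_abs (- g M2)). rewrite Rabs_Ropp in H1. lra.
  - pose proof (Rle_abs (g M1)). lra.
Qed.

Definition PCdata (psi : R -> R) (m : nat) (x : nat -> R) (g : nat -> R -> R) : Prop :=
    (1 <= m)%nat /\ x 0%nat = 0 /\ x m = 1 /\
    (forall i, (i < m)%nat -> x i < x (S i)) /\
    (forall i, (i < m)%nat -> Ck 1 (g i)) /\
    (forall i y, (i < m)%nat -> x i < y < x (S i) -> psi y = g i y) /\
    psi 0 = g 0%nat 0 /\ psi 1 = g (pred m) 1 /\
    (forall i, (0 < i < m)%nat ->
       psi (x i) = g (pred i) (x i) \/ psi (x i) = g i (x i)).

Lemma PCk_data psi : PCk 1 psi -> exists m x g, PCdata psi m x g.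
Proof. intros [m [x [g H]]]. exists m, x, g. exact H. Qed.

Lemma PC_bounded psi : PCk 1 psi -> exists B, 0 <= B /\ forall u, 0 <= u <= 1 -> Rabs (psi u) <= B.
Proof.
  intros HP. destruct (PCk_data psi HP) as [m [x [g [Hm [H0 [H1 [Hinc [Hck [Hin [Hp0 [Hp1 Hbr]]]]]]]]]]].
  assert (HB : forall m', (m' <= m)%nat -> exists B, 0 <= B /\ forall i y, (i < m')%nat ->
            x i <= y <= x (S i) -> Rabs (g i y) <= B).
  { induction m'; intros Hm'.
    - exists 0. split; [lra|]. intros; lia.
    - destruct (IHm' ltac:(lia)) as [B [HB0 HB]].
      destruct (cont_bounded (g m') (x m') (x (S m')) ltac:(apply Rlt_le, Hinc; lia)
                  (Ck1_cont _ (Hck m' ltac:(lia)))) as [B' HB'].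
      exists (Rmax B B'). split. eapply Rle_trans; [exact HB0|apply Rmax_l].
      intros i y Hi Hy. destruct (Nat.eq_dec i m').
      + subst. eapply Rle_trans; [apply HB'; auto|apply Rmax_r].
      + eapply Rle_trans; [apply HB; auto; lia|apply Rmax_l]. }
  destruct (HB m (le_n m)) as [B [HB0 HBm]].
  exists B. split; auto. intros u Hu.
  assert (Hx : forall i, (i <= m)%nat -> 0 <= x i <= 1).
  { intros i Hi. split. rewrite <- H0. apply (part_mono m); auto; lia.
    rewrite <- H1. apply (part_mono m); auto; lia. }
  destruct (part_locate m x Hinc u ltac:(lra)) as [[k [Hk E]]|[k [Hk E]]].
  - destruct (Nat.eq_dec k 0).
    + subst. rewrite H0, Hp0. apply HBm. lia. rewrite H0. split; [lra|]. assert (0 < x 1%nat) by (rewrite <- H0; apply Hinc; lia). lra.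
    + destruct (Nat.eq_dec k m).
      * subst. rewrite H1, Hp1. apply HBm. lia.
        replace (S (pred m)) with m by lia. rewrite H1. split; [|lra].
        assert (x (pred m) < x m) by (generalize (Hinc (pred m) ltac:(lia)); replace (S (pred m)) with m by lia; auto). lra.
      * subst u. destruct (Hbr k ltac:(lia)) as [E|E]; rewrite E.
        -- apply HBm. lia. replace (S (pred k)) with k by lia. split; [|lra].
           replace k with (S (pred k)) at 2 by lia. apply Rlt_le, Hinc; lia.
        -- apply HBm. lia. split; [lra|]. apply Rlt_le, Hinc; lia.
  - rewrite (Hin k u Hk E). apply HBm; auto. lra.
Qed.

Lemma mkp (psi g : R -> R) a b u : 0 <= a -> a < b -> b <= 1 -> a <= u -> u <= b -> Ck 1 g ->
  (forall y, a <= y <= b -> psi y = g y) ->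
  0 <= a < b /\ b <= 1 /\ a <= u <= b /\ Ck 1 g /\ (forall y, a <= y <= b -> psi y = g y).
Proof. intros. split; [split; auto|]. split; [auto|]. split; [split; auto|]. split; auto. Qed.

Lemma PC_piece psi : PCk 1 psi -> forall u, 0 <= u <= 1 ->
  exists a b g, 0 <= a < b /\ b <= 1 /\ a <= u <= b /\ Ck 1 g /\ (forall y, a <= y <= b -> psi y = g y).
Proof.
  intros HP u Hu. destruct (PCk_data psi HP) as [m [x [g [Hm [H0 [H1 [Hinc [Hck [Hin [Hp0 [Hp1 Hbr]]]]]]]]]]].
  assert (Hx : forall i, (i <= m)%nat -> 0 <= x i <= 1).
  { intros i Hi. split. rewrite <- H0. apply (part_mono m); auto; lia.
    rewrite <- H1. apply (part_mono m); auto; lia. }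
  destruct (part_locate m x Hinc u ltac:(lra)) as [[k [Hk E]]|[k [Hk E]]].
  - destruct (Nat.eq_dec k 0).
    + subst. exists 0, (x 1%nat / 2), (g 0%nat).
      assert (0 < x 1%nat) by (rewrite <- H0; apply Hinc; lia).
      assert (x 1%nat <= 1) by (apply Hx; lia).
      rewrite H0. apply mkp; try lra. apply Hck; lia.
      intros y Hy. destruct (Req_dec y 0). subst; auto. apply Hin. lia. rewrite H0. lra.
    + destruct (Nat.eq_dec k m).
      * subst. exists ((x (pred m) + 1)/2), 1, (g (pred m)).
        assert (x (pred m) < 1) by (rewrite <- H1; replace m with (S (pred m)) at 2 by lia; apply Hinc; lia).
        assert (0 <= x (pred m)) by (apply Hx; lia).
        rewrite H1. apply mkp; try lra. apply Hck; lia.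
        intros y Hy. destruct (Req_dec y 1). subst; auto. apply Hin. lia.
        replace (S (pred m)) with m by lia. rewrite H1. lra.
      * subst u. assert (A1 : x (pred k) < x k) by (replace k with (S (pred k)) at 2 by lia; apply Hinc; lia).
        assert (A2 : x k < x (S k)) by (apply Hinc; lia).
        assert (A3 : 0 <= x (pred k)) by (apply Hx; lia).
        assert (A4 : x (S k) <= 1) by (apply Hx; lia).
        destruct (Hbr k ltac:(lia)) as [E|E].
        -- exists ((x (pred k) + x k)/2), (x k), (g (pred k)). apply mkp; try lra. apply Hck; lia.
           intros y Hy. destruct (Req_dec y (x k)). subst; auto. apply Hin. lia.
           replace (S (pred k)) with k by lia. lra.
        -- exists (x k), ((x k + x (S k))/2), (g k). apply mkp; try lra. apply Hck; lia.
           intros y Hy. destruct (Req_dec y (x k)). subst; auto. apply Hin. lia. lra.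
  - assert (0 <= x k) by (apply Hx; lia). assert (x (S k) <= 1) by (apply Hx; lia).
    exists u, ((u + x (S k))/2), (g k). apply mkp; try lra. apply Hck; lia.
    intros y Hy. apply Hin; auto. lra.
Qed.

Lemma diff_open psi g c d u : c < u < d -> (forall y, c < y < d -> psi y = g y) ->
  ex_derive g u -> diff01 psi u.
Proof.
  intros Hu Heq Hd. exists (Derive g u).
  apply Derive_correct in Hd. apply is_derive_Reals in Hd.
  intros eps Heps. destruct (Hd eps Heps) as [del Hdel].
  exists (Rmin del (Rmin (u - c) (d - u))). split. repeat apply Rmin_pos; try lra. apply cond_pos.
  intros y Hy ne hlt.
  assert (h1 : Rabs (y - u) < del) by (eapply Rlt_le_trans; [exact hlt|apply Rmin_l]).
  assert (h2 : Rabs (y - u) < Rmin (u - c) (d - u)) by (eapply Rlt_le_trans; [exact hlt|apply Rmin_r]).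
  assert (h3 : Rabs (y - u) < u - c) by (eapply Rlt_le_trans; [exact h2|apply Rmin_l]).
  assert (h4 : Rabs (y - u) < d - u) by (eapply Rlt_le_trans; [exact h2|apply Rmin_r]).
  apply Rabs_def2 in h3. apply Rabs_def2 in h4.
  rewrite (Heq y) by lra. rewrite (Heq u) by lra.
  specialize (Hdel (y - u) ltac:(lra) h1). replace (u + (y - u)) with y in Hdel by ring. auto.
Qed.

Lemma nondiff_break psi m x g : PCdata psi m x g -> forall u, 0 <= u <= 1 ->
  ~ diff01 psi u -> exists k, (k <= m)%nat /\ u = x k.
Proof.
  intros [Hm [H0 [H1 [Hinc [Hck [Hin [Hp0 [Hp1 Hbr]]]]]]]] u Hu Hnd.
  destruct (part_locate m x Hinc u ltac:(lra)) as [[k [Hk E]]|[k [Hk E]]].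
  - exists k; auto.
  - exfalso. apply Hnd. apply (diff_open psi (g k) (x k) (x (S k))); [exact E| |].
    intros; apply Hin; auto. apply Ck1_ex_derive, Hck; auto.
Qed.

Lemma PC_ex_RInt psi : PCk 1 psi -> ex_RInt psi 0 1.
Proof.
  intros HP. destruct (PCk_data psi HP) as [m [x [g [Hm [H0 [H1 [Hinc [Hck [Hin [Hp0 [Hp1 Hbr]]]]]]]]]]].
  assert (forall j, (j <= m)%nat -> ex_RInt psi 0 (x j)).
  { induction j; intros Hj.
    - rewrite H0. apply ex_RInt_point.
    - apply (ex_RInt_Chasles _ _ (x j)). apply IHj; lia.
      apply (ex_RInt_ext (g j)).
      + intros y Hy. rewrite Rmin_left, Rmax_right in Hy by (apply Rlt_le, Hinc; lia).
        symmetry. apply Hin; auto.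
      + apply (ex_RInt_continuous (V:=R_CompleteNormedModule)). intros; apply Ck1_cont, Hck; lia. }
  rewrite <- H1. auto.
Qed.

Lemma deriv_uniq psi g a b u l : a < b -> a <= u <= b -> 0 <= a -> b <= 1 ->
  (forall y, a <= y <= b -> psi y = g y) -> ex_derive g u -> is_deriv01 psi u l -> l = Derive g u.
Proof.
  intros Hab Hu Ha Hb Heq Hd Hl.
  apply Derive_correct in Hd. apply is_derive_Reals in Hd.
  apply Rminus_diag_uniq. apply Rabs_eq_0.
  apply Rle_antisym; [|apply Rabs_pos]. apply le_eps. intros eps Heps. rewrite Rplus_0_l.
  destruct (Hl (eps/2) ltac:(lra)) as [d1 [Hd1 H1]].
  destruct (Hd (eps/2) ltac:(lra)) as [d2 H2].
  assert (Hex : exists t, 0 < t /\ t < d1 /\ t < d2 /\ t <= (b - a)/2).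
  { pose proof (cond_pos d2). exists (Rmin (Rmin d1 d2) (b - a) / 2).
    pose proof (Rmin_l (Rmin d1 d2) (b-a)). pose proof (Rmin_r (Rmin d1 d2) (b-a)).
    pose proof (Rmin_l d1 d2). pose proof (Rmin_r d1 d2).
    assert (0 < Rmin (Rmin d1 d2) (b - a)) by (repeat apply Rmin_pos; lra). lra. }
  destruct Hex as [t [Ht [Ht1 [Ht2 Ht3]]]].
  destruct (Rle_dec (u + t) b).
  - specialize (H1 (u + t) ltac:(lra) ltac:(lra) ltac:(rewrite Rabs_right by lra; lra)).
    specialize (H2 t ltac:(lra) ltac:(rewrite Rabs_right by lra; lra)).
    rewrite (Heq (u+t)), (Heq u) in H1 by lra. replace (u + t - u) with t in H1 by ring.
    replace (l - Derive g u) with (((g (u+t) - g u)/t - Derive g u) - ((g (u + t) - g u)/t - l)) by ring.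
    eapply Rle_trans. apply Rabs_triang. rewrite Rabs_Ropp. lra.
  - specialize (H1 (u - t) ltac:(lra) ltac:(lra) ltac:(rewrite Rabs_left by lra; lra)).
    specialize (H2 (- t) ltac:(lra) ltac:(rewrite Rabs_left by lra; lra)).
    rewrite (Heq (u-t)), (Heq u) in H1 by lra. replace (u - t - u) with (-t) in H1 by ring.
    replace (u + - t) with (u - t) in H2 by ring.
    replace (l - Derive g u) with (((g (u-t) - g u)/(-t) - Derive g u) - ((g (u - t) - g u)/(-t) - l)) by ring.
    eapply Rle_trans. apply Rabs_triang. rewrite Rabs_Ropp. lra.
Qed.


Lemma supOn_ge a b f y : a <= y <= b -> Rbar_le (Finite (Rabs (f y))) (supOn a b f).
Proof.
  intros Hy. unfold supOn. destruct (Lub_Rbar_correct (fun v => exists y, a <= y <= b /\ v = Rabs (f y))) as [Hub _].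
  apply Hub. exists y. auto.
Qed.

Lemma supOn_le a b f M y : Rbar_le (supOn a b f) (Finite M) -> a <= y <= b -> Rabs (f y) <= M.
Proof.
  intros H Hy. pose proof (supOn_ge a b f y Hy) as H2.
  exact (Rbar_le_trans (Finite (Rabs (f y))) _ (Finite M) H2 H).
Qed.

Lemma lub_ge (E : Rbar -> Prop) v : E v -> Rbar_le v (Rbar_lub E).
Proof.
  intros H. unfold Rbar_lub. destruct (Rbar_ex_lub E) as [l Hl]. simpl. apply (proj1 Hl). auto.
Qed.

Lemma plus_split x y M a b : Rbar_le (Finite a) x -> Rbar_le (Finite b) y ->
  Rbar_le (Rbar_plus x y) (Finite M) ->
  exists x' y', x = Finite x' /\ y = Finite y' /\ x' + y' <= M /\ a <= x' /\ b <= y'.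
Proof.
  destruct x as [x'| |]; destruct y as [y'| |]; simpl; intros H1 H2 H3; try tauto.
  exists x', y'. auto.
Qed.

Lemma plus_ge x y a b : Rbar_le (Finite a) x -> Rbar_le (Finite b) y -> Rbar_le (Finite (a + b)) (Rbar_plus x y).
Proof.
  intros. apply (Rbar_plus_le_compat (Finite a) x (Finite b) y); auto.
Qed.

Lemma Ckn_ge g a b u : a <= u <= b ->
  Rbar_le (Finite (Rabs (g u) + Rabs (Derive g u))) (Ck_norm_on 1 g a b).
Proof.
  intros Hu. simpl. apply plus_ge; apply (supOn_ge a b _ u Hu).
Qed.

Lemma PCk_norm_ge psi a b g : 0 <= a < b -> b <= 1 -> Ck 1 g -> (forall y, a <= y <= b -> psi y = g y) ->
  Rbar_le (Ck_norm_on 1 g a b) (PCk_norm 1 psi).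
Proof.
  intros. unfold PCk_norm. apply lub_ge. exists a, b, g. split; [auto|]. split; [auto|]. split; [auto|]. split; [auto|]. reflexivity.
Qed.

Lemma PCk_norm_nonneg psi : PCk 1 psi -> Rbar_le (Finite 0) (PCk_norm 1 psi).
Proof.
  intros HP. destruct (PC_piece psi HP 0 ltac:(lra)) as [a [b [g [Hab [Hb [Hu [Hg Heq]]]]]]].
  eapply Rbar_le_trans; [|apply (PCk_norm_ge psi a b g); auto].
  eapply Rbar_le_trans; [|apply (Ckn_ge g a b a); lra]. simpl.
  pose proof (Rabs_pos (g a)). pose proof (Rabs_pos (Derive g a)). lra.
Qed.

Lemma PC21_norm_nonneg w w1 w2 : PC21 w w1 w2 -> Rbar_le (Finite 0) (PC21_norm w w1 w2).
Proof.
  intros [_ [_ [HP _]]]. unfold PC21_norm.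
  eapply Rbar_le_trans; [|apply plus_ge; [apply plus_ge; apply (supOn_ge 0 1 _ 0); lra| apply PCk_norm_nonneg; auto]].
  simpl. pose proof (Rabs_pos (w 0)). pose proof (Rabs_pos (w1 0)). lra.
Qed.

Record Wbounds (w w1 w2 : R -> R) (M : R) : Prop := {
  wb_w : forall u, 0 <= u <= 1 -> Rabs (w u) <= M;
  wb_w1 : forall u, 0 <= u <= 1 -> Rabs (w1 u) <= M;
  wb_w2 : forall u, 0 <= u <= 1 -> Rabs (w2 u) <= M;
  wb_d2 : forall u l, 0 <= u <= 1 -> is_deriv01 w2 u l -> Rabs l <= M
}.

Lemma get_bounds w w1 w2 M : PC21 w w1 w2 -> Rbar_le (PC21_norm w w1 w2) (Finite M) -> Wbounds w w1 w2 M.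
Proof.
  intros HPC HM. pose proof HPC as [_ [_ [HP _]]]. unfold PC21_norm in HM.
  assert (A0 := supOn_ge 0 1 w 0 ltac:(lra)).
  assert (A1 := supOn_ge 0 1 w1 0 ltac:(lra)).
  destruct (plus_split _ _ M _ _ (plus_ge _ _ _ _ A0 A1) (PCk_norm_nonneg w2 HP) HM)
    as [s01 [p [E01 [Ep [Hsp [H01 Hp]]]]]].
  assert (HH : Rbar_le (Rbar_plus (supOn 0 1 w) (supOn 0 1 w1)) (Finite s01)) by (rewrite E01; simpl; lra).
  destruct (plus_split _ _ s01 _ _ A0 A1 HH)
    as [s0 [s1 [E0 [E1 [Hs [Hs0 Hs1]]]]]].
  pose proof (Rabs_pos (w 0)). pose proof (Rabs_pos (w1 0)).
  assert (Hpiece : forall a b g u, 0 <= a < b -> b <= 1 -> Ck 1 g -> (forall y, a <= y <= b -> w2 y = g y) ->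
            a <= u <= b -> Rabs (g u) + Rabs (Derive g u) <= M).
  { intros a b g u Hab Hb Hg Heq Hu.
    pose proof (Rbar_le_trans _ _ _ (Ckn_ge g a b u Hu) (PCk_norm_ge w2 a b g Hab Hb Hg Heq)) as X.
    rewrite Ep in X. simpl in X. lra. }
  split.
  - intros u Hu. apply (supOn_le 0 1 w M u); auto. rewrite E0. simpl. lra.
  - intros u Hu. apply (supOn_le 0 1 w1 M u); auto. rewrite E1. simpl. lra.
  - intros u Hu. destruct (PC_piece w2 HP u Hu) as [a [b [g [Hab [Hb [Hua [Hg Heq]]]]]]].
    rewrite (Heq u Hua). pose proof (Hpiece a b g u Hab Hb Hg Heq Hua). pose proof (Rabs_pos (Derive g u)). lra.
  - intros u l Hu Hl. destruct (PC_piece w2 HP u Hu) as [a [b [g [Hab [Hb [Hua [Hg Heq]]]]]]].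
    rewrite (deriv_uniq w2 g a b u l) by (auto; try lra; apply Ck1_ex_derive; auto).
    pose proof (Hpiece a b g u Hab Hb Hg Heq Hua). pose proof (Rabs_pos (g u)). lra.
Qed.


Lemma ex_sub (f : R -> R) u v : ex_RInt f 0 1 -> 0 <= u <= 1 -> 0 <= v <= 1 -> ex_RInt f u v.
Proof.
  intros H Hu Hv.
  assert (G : forall a b, 0 <= a <= b -> b <= 1 -> ex_RInt f a b).
  { intros a b Hab Hb. apply (ex_RInt_Chasles_1 (V:=R_CompleteNormedModule) _ _ _ 1). lra.
    apply (ex_RInt_Chasles_2 (V:=R_CompleteNormedModule) _ 0). lra. auto. }
  destruct (Rle_dec u v). apply G; lra. apply ex_RInt_swap. apply G; lra.
Qed.

Lemma w1_int w w1 w2 u v : PC21 w w1 w2 -> 0 <= u <= 1 -> 0 <= v <= 1 ->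
  w1 v - w1 u = RInt w2 u v.
Proof.
  intros [_ [_ [HP HI]]] Hu Hv. pose proof (PC_ex_RInt w2 HP) as Hex.
  rewrite (HI v Hv), (HI u Hu).
  rewrite <- (RInt_Chasles w2 0 u v) by (apply ex_sub; auto; lra).
  change (plus (RInt w2 0 u) (RInt w2 u v)) with (RInt w2 0 u + RInt w2 u v). ring.
Qed.

Lemma int_bound (f : R -> R) u v K : 0 <= u <= 1 -> 0 <= v <= 1 -> ex_RInt f 0 1 ->
  (forall y, Rmin u v <= y <= Rmax u v -> Rabs (f y) <= K) ->
  Rabs (RInt f u v) <= K * Rabs (v - u).
Proof.
  intros Hu Hv Hex HK. destruct (Rle_dec u v).
  - rewrite Rmin_left, Rmax_right in HK by lra. rewrite (Rabs_right (v - u)) by lra.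
    rewrite Rmult_comm. apply abs_RInt_le_const; auto. apply ex_sub; auto.
  - rewrite Rmin_right, Rmax_left in HK by lra. rewrite (Rabs_left (v - u)) by lra.
    rewrite <- opp_RInt_swap by (apply ex_sub; auto).
    change (Rabs (- RInt f v u) <= K * - (v - u)). rewrite Rabs_Ropp.
    replace (- (v - u)) with (u - v) by ring.
    rewrite Rmult_comm. apply abs_RInt_le_const; auto. lra. apply ex_sub; auto.
Qed.

Lemma w1_lip w w1 w2 M u v : PC21 w w1 w2 -> Wbounds w w1 w2 M -> 0 <= u <= 1 -> 0 <= v <= 1 ->
  Rabs (w1 v - w1 u) <= M * Rabs (v - u).
Proof.
  intros HPC HB Hu Hv. rewrite (w1_int w w1 w2 u v HPC Hu Hv).
  destruct HPC as [_ [_ [HP _]]].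
  apply int_bound; auto. apply PC_ex_RInt; auto.
  intros y Hy. apply (wb_w2 _ _ _ _ HB). split.
  eapply Rle_trans; [|apply Hy]. apply Rmin_glb; lra.
  eapply Rle_trans; [apply Hy|]. apply Rmax_lub; lra.
Qed.

Definition Lip01 (f : R -> R) (M a b : R) : Prop :=
  forall y z, a <= y <= b -> a <= z <= b -> Rabs (f y - f z) <= M * Rabs (y - z).

Lemma w1_lin w w1 w2 M a b u v c : PC21 w w1 w2 -> 0 <= a -> b <= 1 -> Lip01 w2 M a b ->
  a <= u <= b -> a <= v <= b -> a <= c <= b -> 0 <= M ->
  Rabs (w1 v - w1 u - w2 c * (v - u)) <= M * (b - a) * Rabs (v - u).
Proof.
  intros HPC Ha Hb HL Hu Hv Hc HM.
  rewrite (w1_int w w1 w2 u v HPC) by lra.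
  pose proof HPC as [_ [_ [HP _]]]. pose proof (PC_ex_RInt w2 HP) as Hex.
  assert (E : RInt w2 u v - w2 c * (v - u) = RInt (fun y => w2 y - w2 c) u v).
  { rewrite (RInt_minus (V:=R_CompleteNormedModule) w2 (fun _ => w2 c)); [| apply ex_sub; [exact Hex|lra|lra] | apply ex_RInt_const].
    rewrite RInt_const. change (RInt w2 u v - w2 c * (v - u) = RInt w2 u v - (v - u) * w2 c). ring. }
  rewrite E. apply int_bound; try lra.
  - apply (ex_RInt_minus (V:=R_NormedModule) w2 (fun _ => w2 c)); auto. apply ex_RInt_const.
  - intros y Hy. assert (a <= y <= b).
    { split. eapply Rle_trans; [|apply Hy]. apply Rmin_glb; lra.
      eapply Rle_trans; [apply Hy|]. apply Rmax_lub; lra. }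
    eapply Rle_trans. apply HL; auto. apply Rmult_le_compat_l; auto.
    apply Rabs_le. split; lra.
Qed.

Lemma lin_deriv01 (p q x : R) : is_deriv01 (fun y => p * y + q) x p.
Proof.
  apply is_derive_deriv01. auto_derive; auto. ring.
Qed.

Lemma quad_deriv01 (p q r c x : R) : is_deriv01 (fun y => p * y + q + r * (y - c)^2 / 2) x (p + r * (x - c)).
Proof.
  apply is_derive_deriv01. auto_derive; auto. field.
Qed.

Lemma taylor1 w w1 w2 M c u : PC21 w w1 w2 -> Wbounds w w1 w2 M -> 0 <= c <= 1 -> 0 <= u <= 1 ->
  Rabs (w u - w c - (u - c) * w1 c) <= M * (u - c)^2.
Proof.
  intros HPC HB Hc Hu. pose proof HPC as [HD _].
  set (a := Rmin c u). set (b := Rmax c u).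
  assert (Ha : 0 <= a) by (apply Rmin_glb; lra). assert (Hb : b <= 1) by (apply Rmax_lub; lra).
  assert (Hca : a <= c <= b) by (split; [apply Rmin_l|apply Rmax_l]).
  assert (Hua : a <= u <= b) by (split; [apply Rmin_r|apply Rmax_r]).
  assert (Hab : a <= b) by lra.
  assert (HM := DB_abs (fun y => w y - (w1 c * y + 0)) (fun y => w1 y - w1 c) a b c (M * Rabs (u - c))
    Ha Hab Hb).
  assert (Hwid : forall y, a <= y <= b -> Rabs (y - c) <= Rabs (u - c)).
  { intros y Hy. unfold a, b in *. destruct (Rle_dec c u).
    rewrite Rmin_left, Rmax_right in Hy by lra. rewrite !Rabs_right by lra. lra.
    rewrite Rmin_right, Rmax_left in Hy by lra. rewrite !Rabs_left1 by lra. lra. }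
  specialize (HM ltac:(intros y Hy; apply deriv01_minus; [apply HD; lra| apply lin_deriv01])).
  specialize (HM ltac:(intros y Hy; eapply Rle_trans; [apply (w1_lip w w1 w2 M c y); auto; lra|];
               apply Rmult_le_compat_l; [pose proof (Rabs_pos (w1 0)); pose proof (wb_w1 _ _ _ _ HB 0 ltac:(lra)); lra|]; apply Hwid; auto)).
  specialize (HM Hca u Hua). simpl in HM.
  replace (w u - w c - (u - c) * w1 c) with (w u - (w1 c * u + 0) - (w c - (w1 c * c + 0))) by ring.
  eapply Rle_trans. apply HM. rewrite Rmult_assoc. apply Rmult_le_compat_l.
  pose proof (Rabs_pos (w1 0)); pose proof (wb_w1 _ _ _ _ HB 0 ltac:(lra)); lra.
  rewrite <- Rabs_mult. rewrite <- (Rabs_right ((u - c)^2)) by (apply Rle_ge, pow2_ge_0). right. f_equal. ring.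
Qed.

Lemma taylor2 w w1 w2 M a b c u : PC21 w w1 w2 -> Wbounds w w1 w2 M -> 0 <= a -> b <= 1 ->
  Lip01 w2 M a b -> a <= c <= b -> a <= u <= b ->
  Rabs (w u - w c - (u - c) * w1 c - (u - c)^2 / 2 * w2 c) <= M * (b - a) * (u - c)^2.
Proof.
  intros HPC HB Ha Hb HL Hc Hu. pose proof HPC as [HD _].
  assert (HM0 : 0 <= M) by (pose proof (Rabs_pos (w1 0)); pose proof (wb_w1 _ _ _ _ HB 0 ltac:(lra)); lra).
  set (a' := Rmin c u). set (b' := Rmax c u).
  assert (Ha' : a <= a') by (apply Rmin_glb; lra). assert (Hb' : b' <= b) by (apply Rmax_lub; lra).
  assert (Hca : a' <= c <= b') by (split; [apply Rmin_l|apply Rmax_l]).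
  assert (Hua : a' <= u <= b') by (split; [apply Rmin_r|apply Rmax_r]).
  assert (Hwid : forall y, a' <= y <= b' -> Rabs (y - c) <= Rabs (u - c)).
  { intros y Hy. unfold a', b' in *. destruct (Rle_dec c u).
    rewrite Rmin_left, Rmax_right in Hy by lra. rewrite !Rabs_right by lra. lra.
    rewrite Rmin_right, Rmax_left in Hy by lra. rewrite !Rabs_left1 by lra. lra. }
  assert (HM := DB_abs (fun y => w y - (w1 c * y + 0 + w2 c * (y - c)^2/2))
     (fun y => w1 y - (w1 c + w2 c * (y - c))) a' b' c (M * (b - a) * Rabs (u - c))
     ltac:(lra) ltac:(lra) ltac:(lra)).
  specialize (HM ltac:(intros y Hy; apply deriv01_minus; [apply HD; lra| apply quad_deriv01])).
  specialize (HM ltac:(intros y Hy; cbv beta;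
     replace (w1 y - (w1 c + w2 c * (y - c))) with (w1 y - w1 c - w2 c * (y - c)) by ring;
     eapply Rle_trans; [apply (w1_lin w w1 w2 M a b c y c); auto; lra|];
     apply Rmult_le_compat_l; [apply Rmult_le_pos; lra|]; apply Hwid; auto)).
  specialize (HM Hca u Hua). simpl in HM.
  replace (w u - w c - (u - c) * w1 c - (u - c)^2 / 2 * w2 c) with
     (w u - (w1 c * u + 0 + w2 c * (u - c)^2/2) - (w c - (w1 c * c + 0 + w2 c * (c - c)^2/2))) by field.
  eapply Rle_trans. apply HM. rewrite Rmult_assoc. apply Rmult_le_compat_l. apply Rmult_le_pos; lra.
  rewrite <- Rabs_mult. rewrite <- (Rabs_right ((u - c)^2)) by (apply Rle_ge, pow2_ge_0). right. f_equal. ring.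
Qed.

Lemma w2_lip w w1 w2 M a b : Wbounds w w1 w2 M -> 0 <= a -> a <= b -> b <= 1 ->
  (forall y, a <= y <= b -> diff01 w2 y) -> Lip01 w2 M a b.
Proof.
  intros HB Ha Hab Hb Hd y z Hy Hz.
  set (df := fun u => epsilon (inhabits 0) (fun l => is_deriv01 w2 u l)).
  assert (Hdf : forall u, a <= u <= b -> is_deriv01 w2 u (df u)).
  { intros u Hu. unfold df. apply epsilon_spec. apply Hd; auto. }
  apply (DB_abs w2 df a b z M Ha Hab Hb Hdf); auto.
  intros u Hu. apply (wb_d2 _ _ _ _ HB u); [lra|]. apply Hdf; auto.
Qed.


Lemma nat_large (r : R) : exists k : nat, r < INR k.
Proof.
  destruct (archimed (Rabs r)) as [H1 H2].
  assert (Hz : (0 < up (Rabs r))%Z) by (apply lt_IZR; pose proof (Rabs_pos r); lra).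
  exists (Z.to_nat (up (Rabs r))). rewrite INR_IZR_INZ, Z2Nat.id by lia.
  pose proof (Rle_abs r). lra.
Qed.

Definition clamp (x : R) : R := Rmax 0 (Rmin 1 x).

Lemma clamp_in x : 0 <= clamp x <= 1.
Proof. unfold clamp, Rmax, Rmin. repeat destruct Rle_dec; lra. Qed.

Lemma clamp_id x : 0 <= x <= 1 -> clamp x = x.
Proof. unfold clamp, Rmax, Rmin. intros. repeat destruct Rle_dec; lra. Qed.

Lemma clamp_lip x y : Rabs (clamp x - clamp y) <= Rabs (x - y).
Proof.
  unfold clamp, Rmax, Rmin. repeat destruct Rle_dec; unfold Rabs; repeat destruct Rcase_abs; lra.
Qed.

Lemma clamp_cont f : (forall x, 0 <= x <= 1 -> continuous01 f x) ->
  forall y, continuity_pt (fun z => f (clamp z)) y.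
Proof.
  intros Hc y eps Heps. destruct (Hc (clamp y) (clamp_in y) eps Heps) as [d [Hd Hf]].
  exists d. split; auto. intros z [_ Hz]. simpl in *. unfold R_dist in *.
  apply Hf. apply clamp_in. eapply Rle_lt_trans. apply clamp_lip. auto.
Qed.

Lemma cont01_bounded f : (forall x, 0 <= x <= 1 -> continuous01 f x) ->
  exists B, 0 <= B /\ forall x, 0 <= x <= 1 -> Rabs (f x) <= B.
Proof.
  intros Hc. destruct (cont_bounded (fun z => f (clamp z)) 0 1 ltac:(lra)) as [B HB].
  { intros y. apply continuity_pt_filterlim. apply clamp_cont; auto. }
  exists B. split. eapply Rle_trans; [apply Rabs_pos| apply (HB 0); lra].
  intros x Hx. rewrite <- (clamp_id x Hx). apply HB; auto.
Qed.

Lemma UB (G : R -> R -> R) :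
  (forall x, 0 <= x <= 1 -> exists B, forall s, 0 <= s <= 1 -> Rabs (G x s) <= B) ->
  (forall x, 0 <= x <= 1 -> exists d, 0 < d /\ forall y, 0 <= y <= 1 -> Rabs (y - x) < d ->
      forall s, 0 <= s <= 1 -> Rabs (G y s - G x s) <= 1) ->
  exists B, 0 <= B /\ forall x s, 0 <= x <= 1 -> 0 <= s <= 1 -> Rabs (G x s) <= B.
Proof.
  intros H1 H2.
  set (del := fun t => epsilon (inhabits 1) (fun d => 0 < d /\ forall y, 0 <= y <= 1 -> Rabs (y - t) < d ->
      forall s, 0 <= s <= 1 -> Rabs (G y s - G t s) <= 1)).
  assert (Hdel : forall t, 0 <= t <= 1 -> 0 < del t /\ forall y, 0 <= y <= 1 -> Rabs (y - t) < del t ->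
      forall s, 0 <= s <= 1 -> Rabs (G y s - G t s) <= 1).
  { intros t Ht. unfold del. apply epsilon_spec. apply H2; auto. }
  set (del2 := fun t => match Rle_dec 0 t with left _ => match Rle_dec t 1 with left _ => del t / 2 | right _ => 1 end | right _ => 1 end).
  assert (Hdel2 : forall t, 0 < del2 t).
  { intros t. unfold del2. destruct (Rle_dec 0 t); [destruct (Rle_dec t 1)|]; try lra.
    pose proof (proj1 (Hdel t ltac:(lra))). lra. }
  destruct (compactness_value_1d 0 1 (fun t => mkposreal _ (Hdel2 t))) as [d Hd].
  assert (Hunif : forall x y s, 0 <= x <= 1 -> 0 <= y <= 1 -> 0 <= s <= 1 -> Rabs (x - y) < d ->
            Rabs (G x s - G y s) <= 2).
  { intros x y s Hx Hy Hs Hxy. apply NNPP. intros Hn. apply (Hd x Hx). intros [t [Ht [Hxt Hdt]]].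
    apply Hn. simpl in Hxt, Hdt. unfold del2 in Hxt, Hdt.
    destruct (Rle_dec 0 t); [|lra]. destruct (Rle_dec t 1); [|lra].
    destruct (Hdel t Ht) as [Hp Hb].
    assert (A1 := Hb x Hx ltac:(lra) s Hs).
    assert (A2 := Hb y Hy ltac:(replace (y - t) with ((y - x) + (x - t)) by ring;
      eapply Rle_lt_trans; [apply Rabs_triang|]; rewrite <- Rabs_Ropp; replace (- (y - x)) with (x - y) by ring; lra) s Hs).
    replace (G x s - G y s) with ((G x s - G t s) - (G y s - G t s)) by ring.
    eapply Rle_trans. apply Rabs_triang. rewrite Rabs_Ropp. lra. }
  destruct (H1 0 ltac:(lra)) as [B0 HB0].
  assert (Hchain : forall k : nat, forall x s, 0 <= x <= 1 -> x <= INR k * (d / 2) -> 0 <= s <= 1 ->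
            Rabs (G x s) <= B0 + 2 * INR k).
  { induction k; intros x s Hx Hk Hs.
    - simpl in *. replace x with 0 by lra. rewrite Rmult_0_r, Rplus_0_r. apply HB0; auto.
    - rewrite S_INR in *. pose proof (cond_pos d).
      destruct (Rle_dec x (INR k * (d / 2))).
      + specialize (IHk x s Hx r Hs). lra.
      + set (y := Rmax 0 (x - d/2)).
        assert (Hy : 0 <= y <= 1) by (unfold y, Rmax; destruct Rle_dec; lra).
        assert (Hyk : y <= INR k * (d/2)) by (unfold y, Rmax; destruct Rle_dec; pose proof (pos_INR k); nra).
        assert (Hxy : Rabs (x - y) < d) by (unfold y, Rmax; destruct Rle_dec; rewrite Rabs_right; lra).
        specialize (IHk y s Hy Hyk Hs). specialize (Hunif x y s Hx Hy Hs Hxy).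
        replace (G x s) with ((G x s - G y s) + G y s) by ring.
        eapply Rle_trans. apply Rabs_triang. lra. }
  destruct (nat_large (2 / d)) as [k Hk].
  exists (B0 + 2 * INR k). split.
  - pose proof (HB0 0 ltac:(lra)). pose proof (Rabs_pos (G 0 0)). pose proof (pos_INR k). lra.
  - intros x s Hx Hs. apply Hchain; auto. pose proof (cond_pos d).
    assert (INR k * (d/2) >= 1).
    { apply Rmult_lt_compat_r with (r := d) in Hk; auto. unfold Rdiv in Hk.
      rewrite Rmult_assoc, Rinv_l in Hk by lra. lra. }
    lra.
Qed.

Lemma H2_from_deriv (F F' : R -> R -> R) :
  (forall x, 0 <= x <= 1 -> exists B, forall s, 0 <= s <= 1 -> Rabs (F' x s) <= B) ->
  (forall x, 0 <= x <= 1 -> exists d, 0 < d /\ forall y, 0 <= y <= 1 -> y <> x -> Rabs (y - x) < d ->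
     forall s, 0 <= s <= 1 -> Rabs ((F y s - F x s) / (y - x) - F' x s) <= 1) ->
  forall x, 0 <= x <= 1 -> exists d, 0 < d /\ forall y, 0 <= y <= 1 -> Rabs (y - x) < d ->
      forall s, 0 <= s <= 1 -> Rabs (F y s - F x s) <= 1.
Proof.
  intros HB HD x Hx. destruct (HB x Hx) as [B HBx]. destruct (HD x Hx) as [d [Hd Hq]].
  assert (B0 : 0 <= B) by (eapply Rle_trans; [apply Rabs_pos|apply (HBx 0); lra]).
  exists (Rmin d (1 / (B + 1))). split. apply Rmin_pos; auto. apply Rdiv_lt_0_compat; lra.
  intros y Hy Hyx s Hs. destruct (Req_dec y x) as [e|ne].
  { subst. rewrite Rminus_diag, Rabs_R0. lra. }
  assert (h1 : Rabs (y - x) < d) by (eapply Rlt_le_trans; [exact Hyx|apply Rmin_l]).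
  assert (h2 : Rabs (y - x) < 1 / (B + 1)) by (eapply Rlt_le_trans; [exact Hyx|apply Rmin_r]).
  specialize (Hq y Hy ne h1 s Hs). specialize (HBx s Hs).
  assert (hne : y - x <> 0) by lra.
  replace (F y s - F x s) with (((F y s - F x s)/(y - x) - F' x s) * (y - x) + F' x s * (y - x)) by (field; auto).
  eapply Rle_trans. apply Rabs_triang. rewrite !Rabs_mult.
  assert (Rabs (y - x) * (B + 1) <= 1).
  { apply Rmult_lt_compat_r with (r := B + 1) in h2; [|lra]. unfold Rdiv in h2.
    rewrite Rmult_1_l, Rinv_l in h2 by lra. lra. }
  pose proof (Rabs_pos (y - x)). pose proof (Rabs_pos (F' x s)).
  pose proof (Rabs_pos ((F y s - F x s) / (y - x) - F' x s)). nra.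
Qed.

Lemma kernel_bounds phi : kernel_C1 phi ->
  exists Bp, 0 <= Bp /\ forall x s s', 0 <= x <= 1 -> 0 <= s <= 1 -> 0 <= s' <= 1 ->
    Rabs (phi x s) <= Bp /\ Rabs (phi x s - phi x s') <= Bp * Rabs (s - s').
Proof.
  intros [p1 [p2 [p12 [K1 [K2 K3]]]]].
  assert (Bnd : forall F : R -> R -> R, (forall x, 0 <= x <= 1 -> forall s, 0 <= s <= 1 -> continuous01 (F x) s) ->
    forall x, 0 <= x <= 1 -> exists B, forall s, 0 <= s <= 1 -> Rabs (F x s) <= B).
  { intros F HF x Hx. destruct (cont01_bounded (F x) (HF x Hx)) as [B [_ HB]]. exists B; auto. }
  assert (C0 : forall x, 0 <= x <= 1 -> forall s, 0 <= s <= 1 -> continuous01 (phi x) s)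
    by (intros x Hx s Hs; apply (deriv01_cont _ _ (p2 x s)); apply (K1 x Hx s Hs)).
  assert (C1 : forall x, 0 <= x <= 1 -> forall s, 0 <= s <= 1 -> continuous01 (p1 x) s)
    by (intros x Hx s Hs; apply (deriv01_cont _ _ (p12 x s)); apply (K1 x Hx s Hs)).
  assert (C2 : forall x, 0 <= x <= 1 -> forall s, 0 <= s <= 1 -> continuous01 (p2 x) s)
    by (intros x Hx s Hs; apply (K1 x Hx s Hs)).
  assert (C12 : forall x, 0 <= x <= 1 -> forall s, 0 <= s <= 1 -> continuous01 (p12 x) s)
    by (intros x Hx s Hs; apply (K1 x Hx s Hs)).
  destruct (UB phi (Bnd phi C0)) as [B0 [HB0 HB0']].
  { apply (H2_from_deriv phi p1 (Bnd p1 C1)). intros x Hx.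
    destruct (K2 x Hx 1 Rlt_0_1) as [d [Hd Hq]]. exists d. split; auto.
    intros y Hy ne Hyx s Hs. apply (Hq y Hy ne Hyx s Hs). }
  destruct (UB p2 (Bnd p2 C2)) as [B2 [HB2 HB2']].
  { apply (H2_from_deriv p2 p12 (Bnd p12 C12)). intros x Hx.
    destruct (K2 x Hx 1 Rlt_0_1) as [d [Hd Hq]]. exists d. split; auto.
    intros y Hy ne Hyx s Hs. apply (Hq y Hy ne Hyx s Hs). }
  exists (B0 + B2). split. lra. intros x s s' Hx Hs Hs'. split.
  - specialize (HB0' x s Hx Hs). lra.
  - eapply Rle_trans.
    apply (DB_abs (phi x) (p2 x) 0 1 s' B2 ltac:(lra) ltac:(lra) ltac:(lra)); auto.
    intros u Hu. apply (K1 x Hx u Hu).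
    apply Rmult_le_compat_r. apply Rabs_pos. lra.
Qed.


Lemma sum_delta_f (f : nat -> R) a n : (1 <= a <= n)%nat ->
  @eq R (sum_n_m ((fun j => if Nat.eqb j a then f j else 0) : nat -> R) 1 n) (f a).
Proof.
  intros H. rewrite <- (sum_delta_in a (f a) n H). apply sum_ext1. intros k Hk.
  destruct (Nat.eqb_spec k a); subst; auto.
Qed.

Lemma sum_zero1 (f : nat -> R) n : (forall k, (1 <= k <= n)%nat -> f k = 0) -> @eq R (sum_n_m f 1 n) 0.
Proof.
  intros H. rewrite (sum_ext1 f (fun _ => 0)) by auto. rewrite sum_const1. ring.
Qed.

Ltac rdelta f a := let E := fresh in
  match goal with |- context [sum_n_m _ 1 ?n] =>
  pose proof (sum_delta_f f a n ltac:(lia)) as E; cbv beta in E; rewrite E; clear E end.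

Ltac dsplit := repeat match goal with |- context [Nat.eqb ?a ?b] => destruct (Nat.eqb_spec a b) end.

Lemma Pn_decomp theta sigma lambda phi a0 b0 a1 b1 n v i :
  Pn_apply theta sigma lambda phi a0 b0 a1 b1 n v i =
  theta (INR i * hstep n) * sum_n_m (fun j => Lentry a0 b0 a1 b1 n i j * v j) 1 n
  + sigma (INR i * hstep n) * sum_n_m (fun j => Dentry a0 b0 n i j * v j) 1 n
  + lambda (INR i * hstep n) * sum_n_m (fun j => deltaR i j * v j) 1 n
  + sum_n_m (fun j => Phientry phi n i j * v j) 1 n.
Proof.
  unfold Pn_apply, Pentry. rewrite <- !sum_multR, <- !sum_plusR. apply sum_ext1. intros; ring.
Qed.

Lemma sum_deltaR n v i : (1 <= i <= n)%nat -> @eq R (sum_n_m (fun j => deltaR i j * v j) 1 n) (v i).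
Proof.
  intros H. rewrite <- (sum_delta_f v i n H). apply sum_ext1. intros k Hk. unfold deltaR.
  dsplit; subst; try lia; ring.
Qed.

Lemma sum_zero_range (f : nat -> R) a b : (forall k, (a <= k <= b)%nat -> f k = 0) -> @eq R (sum_n_m f a b) 0.
Proof.
  intros H. rewrite (sum_n_m_ext_loc f (fun _ => 0 * 0) a b).
  rewrite (sum_n_m_mult_l (K:=R_Ring) 0 (fun _ => 0)). change (mult 0 ?x) with (0 * x). ring.
  intros k Hk. rewrite H by auto. symmetry. apply Rmult_0_l.
Qed.

Lemma sum_Phi phi n v i : (1 <= i <= n)%nat ->
  @eq R (sum_n_m (fun j => Phientry phi n i j * v j) 1 n)
  (hstep n * sum_n_m (fun j => phi (INR i * hstep n) (INR j * hstep n) * v j) 1 i).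
Proof.
  intros H. rewrite (sum_n_m_Chasles _ 1 i n) by lia.
  change (plus ?a ?b) with (a + b).
  rewrite (sum_zero_range _ (S i) n).
  2:{ intros k Hk. unfold Phientry. destruct (Nat.leb_spec k i); [lia|ring]. }
  rewrite Rplus_0_r.
  rewrite <- sum_multR. apply sum_ext1. intros k Hk. unfold Phientry. destruct (Nat.leb_spec k i); [ring|lia].
Qed.

Lemma sum_L a0 b0 a1 b1 n v i : (2 <= n)%nat -> (1 <= i <= n)%nat ->
  @eq R (sum_n_m (fun j => Lentry a0 b0 a1 b1 n i j * v j) 1 n)
  (((if (2 <=? i)%nat then (if i =? n then 1 - r1 a1 b1 n else 1) * v (i - 1)%nat else 0)
   + (if i =? 1 then 4 * r0 a0 b0 n - 2 else if i =? n then 4 * r1 a1 b1 n - 2 else -2) * v i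
   + (if (i <? n)%nat then (if i =? 1 then 1 - r0 a0 b0 n else 1) * v (S i) else 0)) / hstep n ^ 2).
Proof.
  intros Hn Hi. unfold Lentry.
  set (cm := if i =? n then 1 - r1 a1 b1 n else 1).
  set (c0 := if i =? 1 then 4 * r0 a0 b0 n - 2 else if i =? n then 4 * r1 a1 b1 n - 2 else -2).
  set (cp := if i =? 1 then 1 - r0 a0 b0 n else 1).
  rewrite (sum_ext1 _ (fun j => / hstep n ^ 2 * (((if j =? (i - 1)%nat then cm * v j else 0)
      + (if j =? i then c0 * v j else 0)) + (if j =? S i then cp * v j else 0)))).
  2:{ intros j Hj. unfold Mentry, cm, c0, cp. unfold Rdiv.
      dsplit; try lia; ring. }
  rewrite sum_multR, !sum_plusR. rdelta (fun j => c0 * v j) i.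
  destruct (Nat.leb_spec 2 i).
  - rdelta (fun j => cm * v j) ((i-1)%nat).
    destruct (Nat.ltb_spec i n).
    + rewrite (sum_delta_f (fun j => cp * v j) (S i) n) by lia. unfold Rdiv. ring.
    + rewrite (sum_zero1 (fun j => if j =? S i then cp * v j else 0)).
      2:{ intros k Hk. destruct (Nat.eqb_spec k (S i)); [lia|auto]. }
      unfold Rdiv. ring.
  - rewrite (sum_zero1 (fun j => if j =? (i - 1)%nat then cm * v j else 0)).
    2:{ intros k Hk. destruct (Nat.eqb_spec k (i-1)); [lia|auto]. }
    destruct (Nat.ltb_spec i n).
    + rewrite (sum_delta_f (fun j => cp * v j) (S i) n) by lia. unfold Rdiv. ring.
    + lia.
Qed.

Lemma sum_D1 a0 b0 n v : (1 <= n)%nat ->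
  @eq R (sum_n_m (fun j => Dentry a0 b0 n 1 j * v j) 1 n) (q0 a0 b0 n * v 1%nat).
Proof.
  intros Hn. assert (hstep n <> 0) by (unfold hstep; apply Rinv_neq_0_compat, not_0_INR; lia).
  rewrite <- (sum_delta_f (fun j => q0 a0 b0 n * v j) 1 n) by lia.
  apply sum_ext1. intros j Hj. unfold Dentry, Nentry. simpl. dsplit; try lia; field; auto.
Qed.

Lemma sum_D a0 b0 n v i : (2 <= i <= n)%nat ->
  @eq R (sum_n_m (fun j => Dentry a0 b0 n i j * v j) 1 n) ((v i - v (i - 1)%nat) / hstep n).
Proof.
  intros Hi. assert (hstep n <> 0) by (unfold hstep; apply Rinv_neq_0_compat, not_0_INR; lia).
  rewrite (sum_ext1 _ (fun j => / hstep n * ((if j =? i then v j else 0) - (if j =? (i - 1)%nat then v j else 0)))).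
  2:{ intros j Hj. unfold Dentry, Nentry. dsplit; try lia; field; auto. }
  rewrite sum_multR. unfold Rminus. rewrite sum_plusR.
  rewrite (sum_ext1 (fun j => - (if j =? (i-1)%nat then v j else 0)) (fun j => if j =? (i-1)%nat then - v j else 0)).
  2:{ intros; dsplit; ring. }
  rdelta v i. rdelta (fun j => - v j) ((i-1)%nat).
  unfold Rdiv. ring.
Qed.


Lemma Mnonneg w w1 w2 M : Wbounds w w1 w2 M -> 0 <= M.
Proof. intros HB. pose proof (wb_w _ _ _ _ HB 0 ltac:(lra)). pose proof (Rabs_pos (w 0)). lra. Qed.

Lemma fd_bound w w1 w2 M c h : PC21 w w1 w2 -> Wbounds w w1 w2 M -> 0 < h -> 0 <= c - h -> c <= 1 ->
  Rabs (w1 c - (w c - w (c - h)) / h) <= M * h.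
Proof.
  intros HPC HB Hh H1 H2. pose proof (taylor1 w w1 w2 M c (c - h) HPC HB ltac:(lra) ltac:(lra)) as T.
  replace (w1 c - (w c - w (c - h)) / h) with ((w (c - h) - w c - (c - h - c) * w1 c) / h) by (field; lra).
  unfold Rdiv. rewrite Rabs_mult, Rabs_inv, (Rabs_right h) by lra.
  apply (Rmult_le_reg_r h); auto. rewrite Rmult_assoc, Rinv_l by lra.
  replace (M * h * h) with (M * (c - h - c)^2) by ring. lra.
Qed.

Lemma sd_bad w w1 w2 M c h : PC21 w w1 w2 -> Wbounds w w1 w2 M -> 0 < h -> 0 <= c - h -> c + h <= 1 ->
  Rabs (w (c - h) - 2 * w c + w (c + h)) <= 2 * M * h^2.
Proof.
  intros HPC HB Hh H1 H2.
  pose proof (taylor1 w w1 w2 M c (c - h) HPC HB ltac:(lra) ltac:(lra)) as T1.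
  pose proof (taylor1 w w1 w2 M c (c + h) HPC HB ltac:(lra) ltac:(lra)) as T2.
  replace (w (c - h) - 2 * w c + w (c + h)) with
    ((w (c - h) - w c - (c - h - c) * w1 c) + (w (c + h) - w c - (c + h - c) * w1 c)) by ring.
  eapply Rle_trans. apply Rabs_triang.
  replace ((c - h - c)^2) with (h^2) in T1 by ring. replace ((c + h - c)^2) with (h^2) in T2 by ring. lra.
Qed.

Lemma sd_good w w1 w2 M c h : PC21 w w1 w2 -> Wbounds w w1 w2 M -> 0 < h -> 0 <= c - h -> c + h <= 1 ->
  Lip01 w2 M (c - h) (c + h) ->
  Rabs (w (c - h) - 2 * w c + w (c + h) - h^2 * w2 c) <= 4 * M * h^3.
Proof.
  intros HPC HB Hh H1 H2 HL.
  pose proof (taylor2 w w1 w2 M (c - h) (c + h) c (c - h) HPC HB ltac:(lra) ltac:(lra) HL ltac:(lra) ltac:(lra)) as T1.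
  pose proof (taylor2 w w1 w2 M (c - h) (c + h) c (c + h) HPC HB ltac:(lra) ltac:(lra) HL ltac:(lra) ltac:(lra)) as T2.
  replace (w (c - h) - 2 * w c + w (c + h) - h^2 * w2 c) with
    ((w (c - h) - w c - (c - h - c) * w1 c - (c - h - c)^2/2 * w2 c)
     + (w (c + h) - w c - (c + h - c) * w1 c - (c + h - c)^2/2 * w2 c)) by field.
  eapply Rle_trans. apply Rabs_triang.
  replace (M * (c + h - (c - h)) * (c - h - c)^2) with (2 * M * h^3) in T1 by ring.
  replace (M * (c + h - (c - h)) * (c + h - c)^2) with (2 * M * h^3) in T2 by ring. lra.
Qed.

Definition Qb (w w1 : R -> R) (c d : R) : R :=
  4 * (w (c + d) - w c - d * w1 c) - (w (c + 2 * d) - w c - 2 * d * w1 c).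

Lemma qb_bad w w1 w2 M c d : PC21 w w1 w2 -> Wbounds w w1 w2 M -> 0 <= c <= 1 ->
  0 <= c + d <= 1 -> 0 <= c + 2 * d <= 1 -> Rabs (Qb w w1 c d) <= 8 * M * d^2.
Proof.
  intros HPC HB Hc H1 H2. unfold Qb.
  pose proof (taylor1 w w1 w2 M c (c + d) HPC HB Hc H1) as T1.
  pose proof (taylor1 w w1 w2 M c (c + 2 * d) HPC HB Hc H2) as T2.
  replace (c + d - c) with d in T1 by ring. replace (c + 2 * d - c) with (2 * d) in T2 by ring.
  eapply Rle_trans. apply Rabs_triang. rewrite Rabs_Ropp, Rabs_mult, (Rabs_right 4) by lra.
  replace ((2 * d)^2) with (4 * d^2) in T2 by ring. lra.
Qed.

Lemma qb_good w w1 w2 M a b c d : PC21 w w1 w2 -> Wbounds w w1 w2 M -> 0 <= a -> b <= 1 ->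
  Lip01 w2 M a b -> a <= c <= b -> a <= c + d <= b -> a <= c + 2 * d <= b ->
  Rabs (Qb w w1 c d) <= 8 * M * (b - a) * d^2.
Proof.
  intros HPC HB Ha Hb HL Hc H1 H2. unfold Qb.
  pose proof (taylor2 w w1 w2 M a b c (c + d) HPC HB Ha Hb HL Hc H1) as T1.
  pose proof (taylor2 w w1 w2 M a b c (c + 2 * d) HPC HB Ha Hb HL Hc H2) as T2.
  replace (c + d - c) with d in T1 by ring. replace (c + 2 * d - c) with (2 * d) in T2 by ring.
  replace (4 * (w (c + d) - w c - d * w1 c) - (w (c + 2 * d) - w c - 2 * d * w1 c)) with
   (4 * (w (c + d) - w c - d * w1 c - d^2/2 * w2 c) - (w (c + 2 * d) - w c - 2 * d * w1 c - (2 * d)^2/2 * w2 c)) by field.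
  eapply Rle_trans. apply Rabs_triang. rewrite Rabs_Ropp, Rabs_mult, (Rabs_right 4) by lra.
  replace (M * (b - a) * (2 * d)^2) with (4 * (M * (b - a) * d^2)) in T2 by ring. lra.
Qed.

Lemma lip_cont (F : R -> R) L : 0 <= L -> (forall y z, Rabs (F y - F z) <= L * Rabs (y - z)) ->
  forall x, continuous F x.
Proof.
  intros HL H x. apply continuity_pt_filterlim. intros eps Heps.
  exists (eps / (L + 1)). split. apply Rdiv_lt_0_compat; lra.
  intros y [_ Hy]. simpl in *. unfold R_dist in *.
  eapply Rle_lt_trans. apply H.
  apply Rle_lt_trans with ((L + 1) * Rabs (y - x)). apply Rmult_le_compat_r. apply Rabs_pos. lra.
  apply (Rmult_lt_compat_l (L + 1)) in Hy; [|lra]. unfold Rdiv in Hy.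
  rewrite <- Rmult_assoc, (Rmult_comm (L+1) eps), Rmult_assoc, Rinv_r, Rmult_1_r in Hy by lra. auto.
Qed.

Lemma quad_bound (F : R -> R) L n i : 0 <= L ->
  (forall y z, 0 <= y <= 1 -> 0 <= z <= 1 -> Rabs (F y - F z) <= L * Rabs (y - z)) ->
  (i <= S n)%nat ->
  Rabs (RInt F 0 (INR i * hstep n) - hstep n * sum_n_m (fun j => F (INR j * hstep n)) 1 i) <= L * hstep n.
Proof.
  intros HL HF Hi. set (h := hstep n).
  assert (Hh : 0 < h) by (unfold h, hstep; apply Rinv_0_lt_compat, lt_0_INR; lia).
  assert (H1 : INR (S n) * h = 1) by (unfold h, hstep; field; apply not_0_INR; lia).
  assert (HX : forall j, (j <= S n)%nat -> 0 <= INR j * h <= 1).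
  { intros j Hj. split. apply Rmult_le_pos; [apply pos_INR|lra].
    rewrite <- H1. apply Rmult_le_compat_r; [lra|]. apply le_INR; auto. }
  set (G := fun y => F (clamp y)).
  assert (HG : forall y z, Rabs (G y - G z) <= L * Rabs (y - z)).
  { intros y z. unfold G. eapply Rle_trans. apply HF; apply clamp_in.
    apply Rmult_le_compat_l; auto. apply clamp_lip. }
  assert (Hex : forall a b, ex_RInt G a b).
  { intros a b. apply (ex_RInt_continuous (V:=R_CompleteNormedModule)). intros; apply (lip_cont G L); auto. }
  rewrite (RInt_ext F G) by (intros y Hy; unfold G; rewrite clamp_id; auto;
       rewrite Rmin_left, Rmax_right in Hy; pose proof (HX i Hi); lra).
  set (a := fun j => RInt G 0 (INR j * h)).
  assert (E : RInt G 0 (INR i * h) - h * sum_n_m (fun j => F (INR j * h)) 1 i =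
              sum_n_m (fun j => (a j - a (j - 1)%nat) - h * F (INR j * h)) 1 i).
  { unfold Rminus at 2. rewrite sum_plusR, sum_tele.
    rewrite (sum_ext1 (fun j => - (h * F (INR j * h))) (fun j => -1 * (h * F (INR j * h)))) by (intros; ring).
    rewrite sum_multR, sum_multR. unfold a. simpl. rewrite Rmult_0_l, RInt_point. change (@zero R_CompleteNormedModule) with 0. ring. }
  rewrite E. eapply Rle_trans. apply sum_triang1.
  eapply Rle_trans. apply (sum_le1 _ (fun _ => L * h * h)).
  - intros j Hj. unfold a.
    assert (Hc : RInt G 0 (INR j * h) - RInt G 0 (INR (j - 1) * h) = RInt G (INR (j-1) * h) (INR j * h)).
    { rewrite <- (RInt_Chasles G 0 (INR (j-1) * h) (INR j * h)) by auto.
      change (plus ?x ?y) with (x + y). ring. }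
    rewrite Hc.
    assert (Hjm : INR (j - 1) * h = INR j * h - h) by (rewrite minus_INR by lia; simpl; ring).
    rewrite Hjm.
    assert (E2 : RInt G (INR j * h - h) (INR j * h) - h * F (INR j * h) =
                 RInt (fun y => G y - F (INR j * h)) (INR j * h - h) (INR j * h)).
    { rewrite (RInt_minus (V:=R_CompleteNormedModule) G (fun _ => F (INR j * h))) by (auto; apply ex_RInt_const).
      rewrite RInt_const. change (RInt G (INR j * h - h) (INR j * h) - h * F (INR j * h) =
        RInt G (INR j * h - h) (INR j * h) - (INR j * h - (INR j * h - h)) * F (INR j * h)). ring. }
    rewrite E2. replace (L * h * h) with ((INR j * h - (INR j * h - h)) * (L * h)) by ring.
    apply abs_RInt_le_const. lra.
    apply (ex_RInt_minus (V:=R_NormedModule)); auto. apply ex_RInt_const.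
    intros t Ht. pose proof (HX j ltac:(lia)).
    replace (F (INR j * h)) with (G (INR j * h)) by (unfold G; rewrite clamp_id; auto).
    eapply Rle_trans. apply HG. apply Rmult_le_compat_l; auto. apply Rabs_le. split; lra.
  - rewrite sum_const1. pose proof (HX i Hi). replace (INR i * (L * h * h)) with ((INR i * h) * (L * h)) by ring.
    rewrite <- (Rmult_1_l (L * h)) at 2. apply Rmult_le_compat_r. apply Rmult_le_pos; lra. lra.
Qed.


Lemma w_lip w w1 w2 M y z : PC21 w w1 w2 -> Wbounds w w1 w2 M -> 0 <= y <= 1 -> 0 <= z <= 1 ->
  Rabs (w y - w z) <= M * Rabs (y - z).
Proof.
  intros [HD _] HB Hy Hz. apply (DB_abs w w1 0 1 z M); [lra|lra|lra| intros u Hu; apply HD; auto | intros u Hu; apply (wb_w1 _ _ _ _ HB); auto | lra | lra].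
Qed.

Lemma quad_phi phi Bp w w1 w2 M n i : PC21 w w1 w2 -> Wbounds w w1 w2 M -> 0 <= Bp ->
  (forall x s s', 0 <= x <= 1 -> 0 <= s <= 1 -> 0 <= s' <= 1 ->
    Rabs (phi x s) <= Bp /\ Rabs (phi x s - phi x s') <= Bp * Rabs (s - s')) ->
  0 <= INR i * hstep n <= 1 -> (i <= S n)%nat ->
  Rabs (RInt (fun y => phi (INR i * hstep n) y * w y) 0 (INR i * hstep n) -
        hstep n * sum_n_m (fun j => phi (INR i * hstep n) (INR j * hstep n) * w (INR j * hstep n)) 1 i)
  <= 2 * Bp * M * hstep n.
Proof.
  intros HPC HB HBp Hphi Hx Hi. pose proof (Mnonneg _ _ _ _ HB) as HM.
  set (c := INR i * hstep n).
  pose proof (quad_bound (fun y => phi c y * w y) (2 * Bp * M) n i ltac:(nra)) as Q.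
  cbv beta in Q. apply Q; auto.
  intros y z Hy Hz.
  destruct (Hphi c y z Hx Hy Hz) as [_ P1]. destruct (Hphi c z y Hx Hz Hy) as [P0 _].
  pose proof (wb_w _ _ _ _ HB y Hy). pose proof (w_lip w w1 w2 M y z HPC HB Hy Hz).
  replace (phi c y * w y - phi c z * w z) with ((phi c y - phi c z) * w y + phi c z * (w y - w z)) by ring.
  eapply Rle_trans. apply Rabs_triang. rewrite !Rabs_mult.
  pose proof (Rabs_pos (phi c y - phi c z)). pose proof (Rabs_pos (w y)). pose proof (Rabs_pos (phi c z)).
  pose proof (Rabs_pos (w y - w z)). pose proof (Rabs_pos (y - z)).
  assert (Rabs (phi c y - phi c z) * Rabs (w y) <= Bp * Rabs (y - z) * M) by (apply Rmult_le_compat; auto).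
  assert (Rabs (phi c z) * Rabs (w y - w z) <= Bp * (M * Rabs (y - z))) by (apply Rmult_le_compat; auto).
  nra.
Qed.

Lemma div_h2 X K h : 0 < h -> Rabs X <= K * h^2 -> Rabs (X / h^2) <= K.
Proof.
  intros Hh H. unfold Rdiv. rewrite Rabs_mult, Rabs_inv, (Rabs_right (h^2)) by (apply Rle_ge, pow2_ge_0).
  apply (Rmult_le_reg_r (h^2)). apply pow_lt; auto. rewrite Rmult_assoc, Rinv_l by (apply pow_nonzero; lra). lra.
Qed.

Lemma Lmid_bound w w1 w2 M c h : PC21 w w1 w2 -> Wbounds w w1 w2 M -> 0 < h -> 0 <= c - h -> c + h <= 1 ->
  Rabs (w2 c - (w (c - h) - 2 * w c + w (c + h)) / h^2) <= 3 * M /\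
  (Lip01 w2 M (c - h) (c + h) -> Rabs (w2 c - (w (c - h) - 2 * w c + w (c + h)) / h^2) <= 4 * M * h).
Proof.
  intros HPC HB Hh H1 H2. split.
  - pose proof (div_h2 _ (2 * M) h Hh (sd_bad w w1 w2 M c h HPC HB Hh H1 H2)).
    pose proof (wb_w2 _ _ _ _ HB c ltac:(lra)).
    unfold Rminus at 1. eapply Rle_trans. apply Rabs_triang. rewrite Rabs_Ropp. lra.
  - intros HL. pose proof (sd_good w w1 w2 M c h HPC HB Hh H1 H2 HL) as S.
    replace (w2 c - (w (c - h) - 2 * w c + w (c + h)) / h^2) with
      (- ((w (c - h) - 2 * w c + w (c + h) - h^2 * w2 c) / h^2)) by (field; lra).
    rewrite Rabs_Ropp. apply div_h2; auto. replace (4 * M * h * h^2) with (4 * M * h^3) by ring. auto.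
Qed.

Lemma Lbd_bound w w1 w2 M c h r c0 d : PC21 w w1 w2 -> Wbounds w w1 w2 M -> 0 < h -> 0 <= c - h -> c + h <= 1 ->
  Rabs r <= 1/2 -> d^2 = h^2 -> 0 <= c0 <= 1 -> 0 <= c0 + d <= 1 -> 0 <= c0 + 2 * d <= 1 ->
  (forall a b, a = c - h -> b = c + h -> a <= c0 <= b /\ a <= c0 + d <= b /\ a <= c0 + 2 * d <= b) ->
  Rabs (w2 c - (w (c - h) - 2 * w c + w (c + h)) / h^2 - r * Qb w w1 c0 d / h^2) <= 7 * M /\
  (Lip01 w2 M (c - h) (c + h) ->
   Rabs (w2 c - (w (c - h) - 2 * w c + w (c + h)) / h^2 - r * Qb w w1 c0 d / h^2) <= 12 * M * h).
Proof.
  intros HPC HB Hh H1 H2 Hr Hd Hc0 Hc1 Hc2 Hwin.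
  destruct (Lmid_bound w w1 w2 M c h HPC HB Hh H1 H2) as [L1 L2].
  pose proof (Mnonneg _ _ _ _ HB) as HM.
  assert (Rabs r * 8 <= 4) by lra. pose proof (Rabs_pos r).
  split.
  - pose proof (qb_bad w w1 w2 M c0 d HPC HB Hc0 Hc1 Hc2) as Q. rewrite Hd in Q.
    assert (Rabs (r * Qb w w1 c0 d / h^2) <= 4 * M).
    { apply div_h2; auto. rewrite Rabs_mult. pose proof (Rabs_pos (Qb w w1 c0 d)).
      assert (Rabs r * Rabs (Qb w w1 c0 d) <= Rabs r * (8 * M * h^2)) by (apply Rmult_le_compat_l; auto).
      pose proof (pow2_ge_0 h). nra. }
    eapply Rle_trans. unfold Rminus at 1. apply Rabs_triang. rewrite Rabs_Ropp. lra.
  - intros HL. destruct (Hwin (c - h) (c + h) eq_refl eq_refl) as [W0 [W1 W2]].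
    pose proof (qb_good w w1 w2 M (c - h) (c + h) c0 d HPC HB H1 H2 HL W0 W1 W2) as Q. rewrite Hd in Q.
    replace (c + h - (c - h)) with (2 * h) in Q by ring.
    assert (Rabs (r * Qb w w1 c0 d / h^2) <= 8 * M * h).
    { apply div_h2; auto. rewrite Rabs_mult. pose proof (Rabs_pos (Qb w w1 c0 d)).
      assert (Rabs r * Rabs (Qb w w1 c0 d) <= Rabs r * (8 * M * (2 * h) * h^2)) by (apply Rmult_le_compat_l; auto).
      pose proof (pow2_ge_0 h). assert (0 <= M * h * h^2) by (apply Rmult_le_pos; [nra|lra]). nra. }
    pose proof (L2 HL).
    eapply Rle_trans. unfold Rminus at 1. apply Rabs_triang. rewrite Rabs_Ropp. lra.
Qed.


Definition Err theta sigma lambda phi a0 b0 a1 b1 n (w w1 w2 : R -> R) i :=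
  Rsample n (Pop theta sigma lambda phi w w1 w2) i
  - Pn_apply theta sigma lambda phi a0 b0 a1 b1 n (Rsample n w) i
  - Bn theta a1 b1 n i * (a1 * w1 1 + b1 * w 1).

Lemma Err_decomp theta sigma lambda phi a0 b0 a1 b1 n w w1 w2 i : (1 <= i <= n)%nat ->
  Err theta sigma lambda phi a0 b0 a1 b1 n w w1 w2 i =
  theta (INR i * hstep n) * (w2 (INR i * hstep n) - sum_n_m (fun j => Lentry a0 b0 a1 b1 n i j * w (INR j * hstep n)) 1 n)
  + sigma (INR i * hstep n) * (w1 (INR i * hstep n) - sum_n_m (fun j => Dentry a0 b0 n i j * w (INR j * hstep n)) 1 n)
  + (RInt (fun y => phi (INR i * hstep n) y * w y) 0 (INR i * hstep n) -
        hstep n * sum_n_m (fun j => phi (INR i * hstep n) (INR j * hstep n) * w (INR j * hstep n)) 1 i)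
  - Bn theta a1 b1 n i * (a1 * w1 1 + b1 * w 1).
Proof.
  intros Hi. unfold Err. rewrite Pn_decomp. unfold Rsample at 1. unfold Pop.
  rewrite (sum_deltaR n (Rsample n w) i Hi). rewrite (sum_Phi phi n (Rsample n w) i Hi).
  unfold Rsample. ring.
Qed.

Lemma combine T Sg Lm Dm Qm Bc KL KD KQ : Rabs T <= Bc -> Rabs Sg <= Bc -> Rabs Lm <= KL ->
  Rabs Dm <= KD -> Rabs Qm <= KQ -> Rabs (T * Lm + Sg * Dm + Qm) <= Bc * KL + Bc * KD + KQ.
Proof.
  intros H1 H2 H3 H4 H5.
  eapply Rle_trans. apply Rabs_triang. eapply Rle_trans. apply Rplus_le_compat_r. apply Rabs_triang.
  rewrite !Rabs_mult.
  assert (Rabs T * Rabs Lm <= Bc * KL) by (apply Rmult_le_compat; auto; apply Rabs_pos).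
  assert (Rabs Sg * Rabs Dm <= Bc * KD) by (apply Rmult_le_compat; auto; apply Rabs_pos).
  lra.
Qed.

Lemma id_L1 a0 b0 h w0 w1v w2v wd0 w2c r : 3 * a0 - 2 * h * b0 <> 0 -> h <> 0 -> a0 * wd0 + b0 * w0 = 0 ->
  r = a0 / (3 * a0 - 2 * h * b0) ->
  w2c - ((4 * r - 2) * w1v + (1 - r) * w2v) / h^2 =
  w2c - (w0 - 2 * w1v + w2v) / h^2 - r * (4 * (w1v - w0 - h * wd0) - (w2v - w0 - 2 * h * wd0)) / h^2.
Proof.
  intros HD Hh BC Hr. subst r.
  assert (E : forall X Y, X - Y = - 2 / (h * (3 * a0 - 2 * h * b0)) * (a0 * wd0 + b0 * w0) -> X = Y).
  { intros X Y H. rewrite BC, Rmult_0_r in H. lra. }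
  apply E. field. auto.
Qed.

Lemma id_D1 a0 b0 h w0 w1v wd0 w1c q : a0 - h * b0 <> 0 -> h <> 0 -> a0 * wd0 + b0 * w0 = 0 ->
  q = - b0 / (a0 - h * b0) ->
  w1c - q * w1v =
  (w1c - (w1v - w0) / h) + a0 / (a0 - h * b0) * (w1v - w0 - h * wd0) / h.
Proof.
  intros HD Hh BC Hq. subst q.
  assert (E : forall X Y, X - Y = / (a0 - h * b0) * (a0 * wd0 + b0 * w0) -> X = Y).
  { intros X Y H. rewrite BC, Rmult_0_r in H. lra. }
  apply E. field. auto.
Qed.

Lemma id_Ln a1 b1 h th wm wc w1p wd1 w2c r : 3 * a1 + 2 * h * b1 <> 0 -> h <> 0 ->
  r = a1 / (3 * a1 + 2 * h * b1) ->
  th * (w2c - ((1 - r) * wm + (4 * r - 2) * wc) / h^2) - (2 * h * th / (3 * a1 + 2 * h * b1)) / h^2 * (a1 * wd1 + b1 * w1p) =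
  th * (w2c - (wm - 2 * wc + w1p) / h^2 - r * (4 * (wc - w1p - - h * wd1) - (wm - w1p - 2 * - h * wd1)) / h^2).
Proof.
  intros HD Hh Hr. subst r. field. auto.
Qed.


Lemma grid n : (1 <= n)%nat -> 0 < hstep n /\ INR (S n) * hstep n = 1.
Proof.
  intros Hn. unfold hstep. split. apply Rinv_0_lt_compat, lt_0_INR; lia. field. apply not_0_INR; lia.
Qed.

Lemma grid_in n j : (1 <= n)%nat -> (j <= S n)%nat -> 0 <= INR j * hstep n <= 1.
Proof.
  intros Hn Hj. destruct (grid n Hn) as [Hh H1]. split. apply Rmult_le_pos; [apply pos_INR|lra].
  rewrite <- H1. apply Rmult_le_compat_r; [lra|]. apply le_INR; auto.
Qed.

Lemma grid_pred n j : (1 <= j)%nat -> INR (j - 1) * hstep n = INR j * hstep n - hstep n.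
Proof. intros. rewrite minus_INR by lia. simpl. ring. Qed.

Lemma grid_succ n j : INR (S j) * hstep n = INR j * hstep n + hstep n.
Proof. rewrite S_INR. ring. Qed.

Ltac tb1 := match goal with
  | |- context [Nat.leb ?a ?b] => first [rewrite (proj2 (Nat.leb_le a b) ltac:(lia)) | rewrite (proj2 (Nat.leb_gt a b) ltac:(lia))]
  | |- context [Nat.ltb ?a ?b] => first [rewrite (proj2 (Nat.ltb_lt a b) ltac:(lia)) | rewrite (proj2 (Nat.ltb_ge a b) ltac:(lia))]
  | |- context [Nat.eqb ?a ?b] => first [rewrite (proj2 (Nat.eqb_eq a b) ltac:(lia)) | rewrite (proj2 (Nat.eqb_neq a b) ltac:(lia))]
  end.
Ltac tb := repeat tb1; cbv iota.

Definition phi_hyp (phi : R -> R -> R) Bp := forall x s s', 0 <= x <= 1 -> 0 <= s <= 1 -> 0 <= s' <= 1 ->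
    Rabs (phi x s) <= Bp /\ Rabs (phi x s - phi x s') <= Bp * Rabs (s - s').

Lemma row_mid theta sigma lambda phi a0 b0 a1 b1 n w w1 w2 M Bc Bp i :
  (2 <= n)%nat -> (2 <= i)%nat -> (i < n)%nat -> 0 <= Bc ->
  (forall u, 0 <= u <= 1 -> Rabs (theta u) <= Bc /\ Rabs (sigma u) <= Bc) ->
  0 <= Bp -> phi_hyp phi Bp -> PC21 w w1 w2 -> Wbounds w w1 w2 M ->
  Rabs (Err theta sigma lambda phi a0 b0 a1 b1 n w w1 w2 i) <= Bc * (3 * M) + Bc * (M * hstep n) + 2 * Bp * M * hstep n /\
  (Lip01 w2 M (INR i * hstep n - hstep n) (INR i * hstep n + hstep n) ->
   Rabs (Err theta sigma lambda phi a0 b0 a1 b1 n w w1 w2 i) <= Bc * (4 * M * hstep n) + Bc * (M * hstep n) + 2 * Bp * M * hstep n).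
Proof.
  intros Hn Hi1 Hi2 HBc Hts HBp Hphi HPC HB.
  destruct (grid n ltac:(lia)) as [Hh H1].
  pose proof (grid_in n i ltac:(lia) ltac:(lia)) as Hc.
  pose proof (grid_in n (i - 1) ltac:(lia) ltac:(lia)) as Hcm. rewrite grid_pred in Hcm by lia.
  pose proof (grid_in n (S i) ltac:(lia) ltac:(lia)) as Hcp. rewrite grid_succ in Hcp.
  pose proof (quad_phi phi Bp w w1 w2 M n i HPC HB HBp Hphi Hc ltac:(lia)) as Q.
  rewrite Err_decomp by lia. rewrite sum_L by lia. rewrite sum_D by lia.
  unfold Bn. tb.
  rewrite grid_pred by lia. rewrite grid_succ.
  set (h := hstep n) in *. set (c := INR i * h) in *.
  set (Qm := RInt (fun y => phi c y * w y) 0 c - h * sum_n_m (fun j => phi c (INR j * h) * w (INR j * h)) 1 i) in *.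
  destruct (Hts c Hc) as [T1 T2].
  destruct (Lmid_bound w w1 w2 M c h HPC HB Hh ltac:(lra) ltac:(lra)) as [L1 L2].
  pose proof (fd_bound w w1 w2 M c h HPC HB Hh ltac:(lra) ltac:(lra)) as FD.
  match goal with |- context [Rabs ?X] =>
    replace X with (theta c * (w2 c - (w (c - h) - 2 * w c + w (c + h)) / h^2)
                    + sigma c * (w1 c - (w c - w (c - h)) / h) + Qm) by (unfold Qm; field; lra) end.
  split.
  - apply combine; auto.
  - intros HL. apply combine; auto.
Qed.

Lemma row_first theta sigma lambda phi a0 b0 a1 b1 n w w1 w2 M Bc Bp :
  (2 <= n)%nat -> 0 <= Bc ->
  (forall u, 0 <= u <= 1 -> Rabs (theta u) <= Bc /\ Rabs (sigma u) <= Bc) ->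
  0 <= Bp -> phi_hyp phi Bp -> PC21 w w1 w2 -> Wbounds w w1 w2 M ->
  a0 * w1 0 + b0 * w 0 = 0 ->
  3 * a0 - 2 * hstep n * b0 <> 0 -> a0 - hstep n * b0 <> 0 ->
  2 * Rabs a0 <= Rabs (3 * a0 - 2 * hstep n * b0) -> Rabs a0 <= 2 * Rabs (a0 - hstep n * b0) ->
  Rabs (Err theta sigma lambda phi a0 b0 a1 b1 n w w1 w2 1) <= Bc * (7 * M) + Bc * (3 * M * hstep n) + 2 * Bp * M * hstep n /\
  (Lip01 w2 M (INR 1 * hstep n - hstep n) (INR 1 * hstep n + hstep n) ->
   Rabs (Err theta sigma lambda phi a0 b0 a1 b1 n w w1 w2 1) <= Bc * (12 * M * hstep n) + Bc * (3 * M * hstep n) + 2 * Bp * M * hstep n).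
Proof.
  intros Hn HBc Hts HBp Hphi HPC HB BC HD0 HE0 Hr0 Hp0.
  destruct (grid n ltac:(lia)) as [Hh H1].
  pose proof (grid_in n 1 ltac:(lia) ltac:(lia)) as Hc.
  pose proof (grid_in n 2 ltac:(lia) ltac:(lia)) as Hcp.
  pose proof (quad_phi phi Bp w w1 w2 M n 1 HPC HB HBp Hphi Hc ltac:(lia)) as Q.
  pose proof (Mnonneg _ _ _ _ HB) as HM.
  rewrite Err_decomp by lia. rewrite sum_L by lia. rewrite sum_D1 by lia.
  unfold Bn. tb.
  replace (INR 2 * hstep n) with (hstep n + hstep n) in * by (simpl; ring).
  replace (INR 1 * hstep n) with (hstep n) in * by (simpl; ring).
  replace (hstep n - hstep n) with 0 by ring.
  set (h := hstep n) in *.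
  set (Qm := RInt (fun y => phi h y * w y) 0 h - h * sum_n_m (fun j => phi h (INR j * h) * w (INR j * h)) 1 1) in *.
  destruct (Hts h Hc) as [T1 T2].
  assert (Hrr : Rabs (r0 a0 b0 n) <= 1/2).
  { unfold r0, Rdiv. change (hstep n) with h. rewrite Rabs_mult, Rabs_inv. apply (Rmult_le_reg_r (Rabs (3 * a0 - 2 * h * b0))).
    apply Rabs_pos_lt; auto. rewrite Rmult_assoc, Rinv_l by (apply Rabs_no_R0; auto). lra. }
  assert (Hpp : Rabs (a0 / (a0 - h * b0)) <= 2).
  { unfold Rdiv. rewrite Rabs_mult, Rabs_inv. apply (Rmult_le_reg_r (Rabs (a0 - h * b0))).
    apply Rabs_pos_lt; auto. rewrite Rmult_assoc, Rinv_l by (apply Rabs_no_R0; auto). lra. }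
  assert (IL := id_L1 a0 b0 h (w 0) (w h) (w (h + h)) (w1 0) (w2 h) (r0 a0 b0 n) HD0 ltac:(lra) BC eq_refl).
  assert (ID := id_D1 a0 b0 h (w 0) (w h) (w1 0) (w1 h) (q0 a0 b0 n) HE0 ltac:(lra) BC eq_refl).
  destruct (Lbd_bound w w1 w2 M h h (r0 a0 b0 n) 0 h HPC HB Hh ltac:(lra) ltac:(lra) Hrr eq_refl
      ltac:(lra) ltac:(lra) ltac:(lra) ltac:(intros a b -> ->; lra)) as [L1 L2].
  unfold Qb in L1, L2.
  replace (h - h) with 0 in L1, L2 by ring. replace (0 + h) with h in L1, L2 by ring.
  replace (0 + 2 * h) with (h + h) in L1, L2 by ring.
  pose proof (fd_bound w w1 w2 M h h HPC HB Hh ltac:(lra) ltac:(lra)) as FD.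
  replace (h - h) with 0 in FD by ring.
  pose proof (taylor1 w w1 w2 M 0 h HPC HB ltac:(lra) ltac:(lra)) as T0.
  replace (h - 0) with h in T0 by ring.
  assert (DM : Rabs (w1 h - (w h - w 0) / h + a0 / (a0 - h * b0) * (w h - w 0 - h * w1 0) / h) <= 3 * M * h).
  { eapply Rle_trans. apply Rabs_triang.
    assert (Rabs (a0 / (a0 - h * b0) * (w h - w 0 - h * w1 0) / h) <= 2 * M * h).
    { set (p := a0 / (a0 - h * b0)) in *. set (X := w h - w 0 - h * w1 0) in *.
      replace (p * X / h) with ((p * X) * / h) by reflexivity.
      rewrite Rabs_mult, Rabs_inv, (Rabs_right h) by lra.
      apply (Rmult_le_reg_r h); auto. rewrite Rmult_assoc, Rinv_l by lra. rewrite Rabs_mult.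
      pose proof (Rabs_pos X).
      assert (Rabs p * Rabs X <= 2 * (M * h^2))
        by (apply Rmult_le_compat; auto; apply Rabs_pos). nra. }
    lra. }
  match goal with |- context [Rabs ?X] =>
    replace X with (theta h * (w2 h - (w 0 - 2 * w h + w (h + h)) / h^2
          - r0 a0 b0 n * (4 * (w h - w 0 - h * w1 0) - (w (h + h) - w 0 - 2 * h * w1 0)) / h^2)
                    + sigma h * (w1 h - (w h - w 0) / h + a0 / (a0 - h * b0) * (w h - w 0 - h * w1 0) / h) + Qm) end.
  2:{ rewrite <- IL, <- ID. unfold Qm. set (SS := RInt _ 0 h). set (S2 := sum_n_m _ 1 1). field; lra. }
  split.
  - apply combine; auto.
  - intros HL. apply combine; auto.
Qed.

Lemma row_last theta sigma lambda phi a0 b0 a1 b1 n w w1 w2 M Bc Bp :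
  (2 <= n)%nat -> 0 <= Bc ->
  (forall u, 0 <= u <= 1 -> Rabs (theta u) <= Bc /\ Rabs (sigma u) <= Bc) ->
  0 <= Bp -> phi_hyp phi Bp -> PC21 w w1 w2 -> Wbounds w w1 w2 M ->
  3 * a1 + 2 * hstep n * b1 <> 0 -> 2 * Rabs a1 <= Rabs (3 * a1 + 2 * hstep n * b1) ->
  Rabs (Err theta sigma lambda phi a0 b0 a1 b1 n w w1 w2 n) <= Bc * (7 * M) + Bc * (M * hstep n) + 2 * Bp * M * hstep n /\
  (Lip01 w2 M (INR n * hstep n - hstep n) (INR n * hstep n + hstep n) ->
   Rabs (Err theta sigma lambda phi a0 b0 a1 b1 n w w1 w2 n) <= Bc * (12 * M * hstep n) + Bc * (M * hstep n) + 2 * Bp * M * hstep n).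
Proof.
  intros Hn HBc Hts HBp Hphi HPC HB HD1 Hr1.
  destruct (grid n ltac:(lia)) as [Hh H1].
  assert (Hh3 : hstep n <= 1/3).
  { assert (3 <= INR (S n)) by (replace 3 with (INR 3) by (simpl; ring); apply le_INR; lia). nra. }
  pose proof (grid_in n n ltac:(lia) ltac:(lia)) as Hc.
  pose proof (quad_phi phi Bp w w1 w2 M n n HPC HB HBp Hphi Hc ltac:(lia)) as Q.
  pose proof (Mnonneg _ _ _ _ HB) as HM.
  rewrite Err_decomp by lia. rewrite sum_L by lia. rewrite sum_D by lia.
  unfold Bn, bn. tb.
  rewrite grid_pred by lia.
  assert (Xn : INR n * hstep n = 1 - hstep n) by (rewrite grid_succ in H1; lra).
  rewrite Xn in *.
  set (h := hstep n) in *.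
  set (Qm := RInt (fun y => phi (1 - h) y * w y) 0 (1 - h) - h * sum_n_m (fun j => phi (1 - h) (INR j * h) * w (INR j * h)) 1 n) in *.
  destruct (Hts (1 - h) Hc) as [T1 T2].
  assert (Hrr : Rabs (r1 a1 b1 n) <= 1/2).
  { unfold r1, Rdiv. change (hstep n) with h. rewrite Rabs_mult, Rabs_inv. apply (Rmult_le_reg_r (Rabs (3 * a1 + 2 * h * b1))).
    apply Rabs_pos_lt; auto. rewrite Rmult_assoc, Rinv_l by (apply Rabs_no_R0; auto). lra. }
  assert (IL := id_Ln a1 b1 h (theta (1 - h)) (w (1 - h - h)) (w (1 - h)) (w 1) (w1 1) (w2 (1 - h)) (r1 a1 b1 n) HD1 ltac:(lra) eq_refl).
  destruct (Lbd_bound w w1 w2 M (1 - h) h (r1 a1 b1 n) 1 (- h) HPC HB Hh ltac:(lra) ltac:(lra) Hrr ltac:(ring)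
      ltac:(lra) ltac:(lra) ltac:(lra) ltac:(intros a b -> ->; lra)) as [L1 L2].
  unfold Qb in L1, L2.
  replace (1 - h + h) with 1 in L1, L2 by ring. replace (1 + - h) with (1 - h) in L1, L2 by ring.
  replace (1 + 2 * - h) with (1 - h - h) in L1, L2 by ring.
  pose proof (fd_bound w w1 w2 M (1 - h) h HPC HB Hh ltac:(lra) ltac:(lra)) as FD.
  match goal with |- context [Rabs ?X] =>
    replace X with ((theta (1 - h) * (w2 (1 - h) - ((1 - r1 a1 b1 n) * w (1 - h - h) + (4 * r1 a1 b1 n - 2) * w (1 - h)) / h^2)
       - (2 * h * theta (1 - h) / (3 * a1 + 2 * h * b1)) / h^2 * (a1 * w1 1 + b1 * w 1))
       + sigma (1 - h) * (w1 (1 - h) - (w (1 - h) - w (1 - h - h)) / h) + Qm) end.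
  2:{ unfold Qm. field. lra. }
  rewrite IL.
  split.
  - apply combine; auto.
  - intros HL. replace (1 - h - h) with (1 - h - h) in HL by ring.
    replace (1 - h + h) with 1 in HL by ring. apply combine; auto.
Qed.


Definition inwin (n i : nat) (p : R) : Prop :=
  INR i * hstep n - hstep n <= p <= INR i * hstep n + hstep n.

Definition ind (p : R) (n i : nat) : R :=
  if excluded_middle_informative (inwin n i p) then 1 else 0.

Fixpoint chi (b : nat -> R) (n K i : nat) : R :=
  match K with O => 0 | S K' => chi b n K' i + ind (b K') n i end.

Lemma ind_01 p n i : 0 <= ind p n i <= 1.
Proof. unfold ind. destruct excluded_middle_informative; lra. Qed.

Lemma chi_nonneg b n K i : 0 <= chi b n K i.
Proof. induction K; simpl. lra. pose proof (ind_01 (b K) n i). lra. Qed.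

Lemma chi_ge1 b n K i : (exists k, (k < K)%nat /\ inwin n i (b k)) -> 1 <= chi b n K i.
Proof.
  intros [k [Hk Hw]]. induction K. lia. simpl. destruct (Nat.eq_dec k K).
  - subst. unfold ind. destruct excluded_middle_informative; [|contradiction]. pose proof (chi_nonneg b n K i). lra.
  - pose proof (IHK ltac:(lia)). pose proof (ind_01 (b K) n i). lra.
Qed.

Lemma ind_count p n : (1 <= n)%nat -> sum_n_m (fun i => ind p n i) 1 n <= 3.
Proof.
  intros Hn. destruct (grid n Hn) as [Hh _]. set (h := hstep n) in *.
  set (c := p / h).
  destruct (archimed (c - 1)) as [A1 A2].
  set (z := (up (c - 1) - 1)%Z).
  assert (Hz1 : IZR z <= c - 1) by (unfold z; rewrite minus_IZR; simpl; lra).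
  assert (Hz2 : c - 1 < IZR z + 1) by (unfold z; rewrite minus_IZR; simpl; lra).
  set (k0 := Z.to_nat z).
  assert (Hk : forall i, inwin n i p -> i = k0 \/ i = S k0 \/ i = S (S k0)).
  { intros i [W1 W2]. change (hstep n) with h in W1, W2.
    assert (E1 : INR i - 1 <= c).
    { unfold c. apply (Rmult_le_reg_r h); auto. unfold Rdiv. rewrite Rmult_assoc, Rinv_l by lra. lra. }
    assert (E2 : c <= INR i + 1).
    { unfold c. apply (Rmult_le_reg_r h); auto. unfold Rdiv. rewrite Rmult_assoc, Rinv_l by lra. lra. }
    rewrite INR_IZR_INZ in E1, E2.
    assert (Z1 : (z <= Z.of_nat i)%Z) by (apply le_IZR; lra).
    assert (Z2 : (Z.of_nat i < z + 3)%Z) by (apply lt_IZR; rewrite plus_IZR; simpl; lra).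
    unfold k0. lia. }
  eapply Rle_trans. apply (sum_le1 _ (fun i => ((if Nat.eqb i k0 then 1 else 0) + (if Nat.eqb i (S k0) then 1 else 0))
                                               + (if Nat.eqb i (S (S k0)) then 1 else 0))).
  { intros i Hi. unfold ind. destruct excluded_middle_informative as [W|W].
    - destruct (Hk i W) as [E|[E|E]]; subst i;
      repeat match goal with |- context [Nat.eqb ?a ?b] => destruct (Nat.eqb_spec a b) end; try lia; lra.
    - repeat match goal with |- context [Nat.eqb ?a ?b] => destruct (Nat.eqb_spec a b) end; lra. }
  rewrite !sum_plusR.
  assert (forall a, sum_n_m ((fun j => if j =? a then 1 else 0) : nat -> R) 1 n <= 1) as SD by (intros; apply sum_delta_le).
  pose proof (SD k0). pose proof (SD (S k0)). pose proof (SD (S (S k0))). cbv beta in *. lra.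
Qed.

Lemma chi_count b n K : (1 <= n)%nat -> sum_n_m (fun i => chi b n K i) 1 n <= 3 * INR K.
Proof.
  intros Hn. induction K.
  - simpl. rewrite sum_zero1 by auto. lra.
  - rewrite S_INR. simpl chi. rewrite sum_plusR. pose proof (ind_count (b K) n Hn). change (sum_n_m (fun i => chi b n K i) 1 n + sum_n_m (fun i => ind (b K) n i) 1 n <= 3 * (INR K + 1)). lra.
Qed.


Lemma row_all theta sigma lambda phi a0 b0 a1 b1 n w w1 w2 M Bc Bp i :
  (2 <= n)%nat -> (1 <= i <= n)%nat -> 0 <= Bc ->
  (forall u, 0 <= u <= 1 -> Rabs (theta u) <= Bc /\ Rabs (sigma u) <= Bc) ->
  0 <= Bp -> phi_hyp phi Bp -> PC21 w w1 w2 -> Wbounds w w1 w2 M ->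
  a0 * w1 0 + b0 * w 0 = 0 ->
  3 * a0 - 2 * hstep n * b0 <> 0 -> a0 - hstep n * b0 <> 0 -> 3 * a1 + 2 * hstep n * b1 <> 0 ->
  2 * Rabs a0 <= Rabs (3 * a0 - 2 * hstep n * b0) -> Rabs a0 <= 2 * Rabs (a0 - hstep n * b0) ->
  2 * Rabs a1 <= Rabs (3 * a1 + 2 * hstep n * b1) ->
  Rabs (Err theta sigma lambda phi a0 b0 a1 b1 n w w1 w2 i) <= (15 * Bc + 2 * Bp) * M /\
  (Lip01 w2 M (INR i * hstep n - hstep n) (INR i * hstep n + hstep n) ->
   Rabs (Err theta sigma lambda phi a0 b0 a1 b1 n w w1 w2 i) <= (15 * Bc + 2 * Bp) * M * hstep n).
Proof.
  intros Hn Hi HBc Hts HBp Hphi HPC HB BC HD0 HE0 HD1 R0 P0 R1.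
  destruct (grid n ltac:(lia)) as [Hh H1].
  assert (Hh1 : hstep n <= 1).
  { assert (1 <= INR (S n)) by (replace 1 with (INR 1) by (simpl; ring); apply le_INR; lia). nra. }
  pose proof (Mnonneg _ _ _ _ HB) as HM.
  assert (K1 : 0 <= Bc * M * hstep n) by (apply Rmult_le_pos; [apply Rmult_le_pos|]; lra).
  assert (K2 : 0 <= Bp * M * hstep n) by (apply Rmult_le_pos; [apply Rmult_le_pos|]; lra).
  assert (K3 : Bc * M * hstep n <= Bc * M) by (rewrite <- (Rmult_1_r (Bc * M)) at 2; apply Rmult_le_compat_l; [apply Rmult_le_pos|]; lra).
  assert (K4 : Bp * M * hstep n <= Bp * M) by (rewrite <- (Rmult_1_r (Bp * M)) at 2; apply Rmult_le_compat_l; [apply Rmult_le_pos|]; lra).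
  destruct (Nat.eq_dec i 1) as [->|Hi1].
  { destruct (row_first theta sigma lambda phi a0 b0 a1 b1 n w w1 w2 M Bc Bp Hn HBc Hts HBp Hphi HPC HB BC HD0 HE0 R0 P0) as [A B].
    split. eapply Rle_trans; [exact A|]. nra. intros HL. eapply Rle_trans; [exact (B HL)|]. nra. }
  destruct (Nat.eq_dec i n) as [->|Hin].
  { destruct (row_last theta sigma lambda phi a0 b0 a1 b1 n w w1 w2 M Bc Bp Hn HBc Hts HBp Hphi HPC HB HD1 R1) as [A B].
    split. eapply Rle_trans; [exact A|]. nra. intros HL. eapply Rle_trans; [exact (B HL)|]. nra. }
  destruct (row_mid theta sigma lambda phi a0 b0 a1 b1 n w w1 w2 M Bc Bp i Hn ltac:(lia) ltac:(lia) HBc Hts HBp Hphi HPC HB) as [A B].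
  split. eapply Rle_trans; [exact A|]. nra. intros HL. eapply Rle_trans; [exact (B HL)|]. nra.
Qed.

Lemma sq_le x B : 0 <= B -> Rabs x <= B -> x^2 <= B^2.
Proof. intros HB Hx. rewrite <- (pow2_abs x). pose proof (Rabs_pos x). nra. Qed.

Lemma norm_bound theta sigma lambda phi a0 b0 a1 b1 n w w1 w2 M Bc Bp (b : nat -> R) K :
  (2 <= n)%nat -> 0 <= Bc ->
  (forall u, 0 <= u <= 1 -> Rabs (theta u) <= Bc /\ Rabs (sigma u) <= Bc) ->
  0 <= Bp -> phi_hyp phi Bp -> PC21 w w1 w2 -> Wbounds w w1 w2 M ->
  a0 * w1 0 + b0 * w 0 = 0 ->
  3 * a0 - 2 * hstep n * b0 <> 0 -> a0 - hstep n * b0 <> 0 -> 3 * a1 + 2 * hstep n * b1 <> 0 ->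
  2 * Rabs a0 <= Rabs (3 * a0 - 2 * hstep n * b0) -> Rabs a0 <= 2 * Rabs (a0 - hstep n * b0) ->
  2 * Rabs a1 <= Rabs (3 * a1 + 2 * hstep n * b1) ->
  (forall u, 0 <= u <= 1 -> ~ diff01 w2 u -> exists k, (k < K)%nat /\ u = b k) ->
  norm2d n (fun i => Err theta sigma lambda phi a0 b0 a1 b1 n w w1 w2 i)
    <= (15 * Bc + 2 * Bp) * sqrt (1 + 3 * INR K) * sqrt (hstep n) * M.
Proof.
  intros Hn HBc Hts HBp Hphi HPC HB BC HD0 HE0 HD1 R0 P0 R1 Hbk.
  destruct (grid n ltac:(lia)) as [Hh H1].
  assert (Hh1 : hstep n <= 1).
  { assert (1 <= INR (S n)) by (replace 1 with (INR 1) by (simpl; ring); apply le_INR; lia). nra. }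
  pose proof (Mnonneg _ _ _ _ HB) as HM.
  set (A := 15 * Bc + 2 * Bp). assert (HA : 0 <= A) by (unfold A; lra).
  assert (HAM : 0 <= A * M) by (apply Rmult_le_pos; lra).
  assert (Hrow : forall i, (1 <= i <= n)%nat ->
     (Err theta sigma lambda phi a0 b0 a1 b1 n w w1 w2 i)^2 <= (A * M)^2 * (hstep n ^ 2 + chi b n K i)).
  { intros i Hi.
    destruct (row_all theta sigma lambda phi a0 b0 a1 b1 n w w1 w2 M Bc Bp i Hn Hi HBc Hts HBp Hphi HPC HB BC
                HD0 HE0 HD1 R0 P0 R1) as [E1 E2].
    pose proof (chi_nonneg b n K i) as C0.
    destruct (classic (exists k, (k < K)%nat /\ inwin n i (b k))) as [Hbad|Hgood].
    - pose proof (chi_ge1 b n K i Hbad). pose proof (sq_le _ _ HAM E1).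
      assert (0 <= (A * M)^2) by apply pow2_ge_0. pose proof (pow2_ge_0 (hstep n)). nra.
    - assert (HL : Lip01 w2 M (INR i * hstep n - hstep n) (INR i * hstep n + hstep n)).
      { pose proof (grid_in n (i - 1) ltac:(lia) ltac:(lia)) as Hcm. rewrite grid_pred in Hcm by lia.
        pose proof (grid_in n (S i) ltac:(lia) ltac:(lia)) as Hcp. rewrite grid_succ in Hcp.
        apply (w2_lip w w1 w2 M); auto; try lra.
        intros y Hy. apply NNPP. intros Hnd. destruct (Hbk y ltac:(lra) Hnd) as [k [Hk Hyk]].
        apply Hgood. exists k. split; auto. unfold inwin. rewrite <- Hyk. lra. }
      pose proof (E2 HL) as E. assert (0 <= A * M * hstep n) by (apply Rmult_le_pos; lra).
      pose proof (sq_le _ _ H E). assert (0 <= (A * M)^2) by apply pow2_ge_0.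
      replace ((A * M * hstep n)^2) with ((A * M)^2 * hstep n ^ 2) in H0 by ring. nra. }
  assert (Hsum : sum_n_m (fun i => (Err theta sigma lambda phi a0 b0 a1 b1 n w w1 w2 i)^2) 1 n
                 <= (A * M)^2 * (1 + 3 * INR K)).
  { eapply Rle_trans. apply sum_le1. exact Hrow.
    rewrite sum_multR, sum_plusR, sum_const1.
    pose proof (chi_count b n K ltac:(lia)). apply Rmult_le_compat_l. apply pow2_ge_0.
    assert (INR n * hstep n ^ 2 <= 1).
    { assert (INR n * hstep n <= 1) by (rewrite grid_succ in H1; lra).
      replace (INR n * hstep n ^ 2) with ((INR n * hstep n) * hstep n) by ring.
      assert (0 <= INR n * hstep n) by (apply Rmult_le_pos; [apply pos_INR|lra]). nra. }
    change (sum_n_m (chi b n K) 1 n <= 3 * INR K) in H. lra. }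
  unfold norm2d.
  assert (HK : 0 <= 1 + 3 * INR K) by (pose proof (pos_INR K); lra).
  assert (S1 : sqrt (sum_n_m (fun i => (Err theta sigma lambda phi a0 b0 a1 b1 n w w1 w2 i)^2) 1 n)
               <= A * M * sqrt (1 + 3 * INR K)).
  { rewrite <- (sqrt_pow2 (A * M)) by auto. rewrite <- sqrt_mult_alt by apply pow2_ge_0.
    apply sqrt_le_1_alt. exact Hsum. }
  pose proof (sqrt_pos (hstep n)).
  replace (A * sqrt (1 + 3 * INR K) * sqrt (hstep n) * M) with (sqrt (hstep n) * (A * M * sqrt (1 + 3 * INR K))) by ring.
  apply Rmult_le_compat_l; auto.
Qed.


Lemma mult_pinf x : 0 < x -> Rbar_mult (Finite x) p_infty = p_infty.
Proof. intros H. simpl. unfold Rbar_mult'. repeat destruct Rle_dec; try lra; repeat destruct Rle_lt_or_eq_dec; try lra; auto. Qed.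

Lemma ratio_ok a b h : 0 <= h -> (a = 0 \/ 2 * h * Rabs b <= Rabs a) ->
  2 * Rabs a <= Rabs (3 * a - 2 * h * b) /\ Rabs a <= 2 * Rabs (a - h * b) /\ 2 * Rabs a <= Rabs (3 * a + 2 * h * b).
Proof.
  intros Hh [->|H].
  - rewrite Rabs_R0. pose proof (Rabs_pos (3 * 0 - 2 * h * b)). pose proof (Rabs_pos (0 - h * b)).
    pose proof (Rabs_pos (3 * 0 + 2 * h * b)). lra.
  - assert (E : Rabs (h * b) = h * Rabs b) by (rewrite Rabs_mult, (Rabs_right h) by lra; auto).
    set (hb := h * b) in *.
    pose proof (Rabs_triang_inv (3 * a) (2 * hb)) as T1.
    pose proof (Rabs_triang_inv a hb) as T2.
    pose proof (Rabs_triang_inv (3 * a) (- (2 * hb))) as T3.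
    rewrite Rabs_Ropp in T3. rewrite (Rabs_mult 3 a), (Rabs_mult 2 hb) in T1, T3.
    rewrite (Rabs_right 3) in T1, T3 by lra. rewrite (Rabs_right 2) in T1, T3 by lra.
    replace (3 * a - 2 * h * b) with (3 * a - 2 * hb) by (unfold hb; ring).
    replace (a - h * b) with (a - hb) by (unfold hb; ring).
    replace (3 * a + 2 * h * b) with (3 * a - - (2 * hb)) by (unfold hb; ring). lra.
Qed.

Lemma eps_ok a b : exists e, 0 < e /\ forall h, 0 <= h <= e -> a = 0 \/ 2 * h * Rabs b <= Rabs a.
Proof.
  destruct (Req_dec a 0) as [->|Ha].
  - exists 1. split. lra. auto.
  - exists (Rabs a / (2 * Rabs b + 1)). pose proof (Rabs_pos b). pose proof (Rabs_pos_lt a Ha).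
    split. apply Rdiv_lt_0_compat; lra. intros h Hh. right.
    assert (h * (2 * Rabs b + 1) <= Rabs a).
    { destruct Hh as [_ Hh]. apply (Rmult_le_compat_r (2 * Rabs b + 1)) in Hh; [|lra].
      unfold Rdiv in Hh. rewrite Rmult_assoc, Rinv_l, Rmult_1_r in Hh by lra. auto. }
    nra.
Qed.

Lemma breakpoints theta sigma lambda : PCk 1 theta -> PCk 1 sigma -> PCk 1 lambda ->
  exists (b : nat -> R) (K : nat), forall u, inI theta sigma lambda u -> exists k, (k < K)%nat /\ u = b k.
Proof.
  intros H1 H2 H3.
  destruct (PCk_data _ H1) as [m1 [x1 [g1 D1]]].
  destruct (PCk_data _ H2) as [m2 [x2 [g2 D2]]].
  destruct (PCk_data _ H3) as [m3 [x3 [g3 D3]]].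
  exists (fun k => if (k <=? m1)%nat then x1 k else if (k - S m1 <=? m2)%nat then x2 (k - S m1)%nat
                   else x3 (k - S m1 - S m2)%nat).
  exists (S m1 + S m2 + S m3)%nat.
  intros u [Hu [N|[N|N]]].
  - destruct (nondiff_break _ _ _ _ D1 u Hu N) as [k [Hk E]]. exists k. split. lia.
    destruct (Nat.leb_spec k m1); [auto|lia].
  - destruct (nondiff_break _ _ _ _ D2 u Hu N) as [k [Hk E]]. exists (S m1 + k)%nat. split. lia.
    destruct (Nat.leb_spec (S m1 + k) m1); [lia|].
    destruct (Nat.leb_spec (S m1 + k - S m1) m2); [|lia].
    replace (S m1 + k - S m1)%nat with k by lia. auto.
  - destruct (nondiff_break _ _ _ _ D3 u Hu N) as [k [Hk E]]. exists (S m1 + S m2 + k)%nat. split. lia.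
    destruct (Nat.leb_spec (S m1 + S m2 + k) m1); [lia|].
    destruct (Nat.leb_spec (S m1 + S m2 + k - S m1) m2); [lia|].
    replace (S m1 + S m2 + k - S m1 - S m2)%nat with k by lia. auto.
Qed.

Theorem lemma2
  (theta sigma lambda : R -> R) (phi : R -> R -> R) (a0 b0 a1 b1 : R)
  (Htheta : PCk 1 theta) (Hsigma : PCk 1 sigma) (Hlambda : PCk 1 lambda)
  (Htheta_pos : exists c, 0 < c /\ forall x, 0 <= x <= 1 -> c <= theta x)
  (Hphi : kernel_C1 phi)
  (Hwd : forall n, (1 <= n)%nat ->
     3 * a1 + 2 * hstep n * b1 <> 0 /\ 3 * a0 - 2 * hstep n * b0 <> 0 /\
     a0 - hstep n * b0 <> 0)
  (T rho : R) (HT : 0 < T) (Hrho : 0 <= rho < T) :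
  exists C, 0 < C /\
  forall xi xix xixx : R -> R -> R,
    (forall t, rho <= t <= T ->
       PC21 (fun x => xi x t) (fun x => xix x t) (fun x => xixx x t)) ->
    cont_PC21 rho T xi xix xixx ->
    (forall t, rho <= t <= T -> a0 * xix 0 t + b0 * xi 0 t = 0) ->
    (forall t, rho <= t <= T -> forall x, 0 <= x <= 1 ->
       ~ diff01 (fun y => xixx y t) x -> inI theta sigma lambda x) ->
    exists N, forall n, (N <= n)%nat ->
      Rbar_le
        (Lub_Rbar (fun v => exists t, rho <= t <= T /\
           v = norm2d n (fun i =>
                 Rsample n (Pop theta sigma lambda phi
                         (fun x => xi x t) (fun x => xix x t)
                         (fun x => xixx x t)) i
               - Pn_apply theta sigma lambda phi a0 b0 a1 b1 n
                   (Rsample n (fun x => xi x t)) i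
               - Bn theta a1 b1 n i * (a1 * xix 1 t + b1 * xi 1 t))))
        (Rbar_mult (C * sqrt (hstep n))
           (Rbar_lub (fun v => exists t, rho <= t <= T /\
              v = PC21_norm (fun x => xi x t) (fun x => xix x t)
                            (fun x => xixx x t)))).
Proof.
  destruct (PC_bounded theta Htheta) as [Bt [HBt0 HBt]].
  destruct (PC_bounded sigma Hsigma) as [Bs [HBs0 HBs]].
  set (Bc := Bt + Bs).
  assert (HBc : 0 <= Bc) by (unfold Bc; lra).
  assert (Hts : forall u, 0 <= u <= 1 -> Rabs (theta u) <= Bc /\ Rabs (sigma u) <= Bc).
  { intros u Hu. pose proof (HBt u Hu). pose proof (HBs u Hu). unfold Bc. lra. }
  destruct (kernel_bounds phi Hphi) as [Bp [HBp Hp]].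
  destruct (breakpoints theta sigma lambda Htheta Hsigma Hlambda) as [b [K HbK]].
  set (C0 := (15 * Bc + 2 * Bp) * sqrt (1 + 3 * INR K)).
  assert (HC0 : 0 <= C0) by (unfold C0; apply Rmult_le_pos; [lra|apply sqrt_pos]).
  exists (C0 + 1). split. lra.
  intros xi xix xixx HPC Hcont HBC Hnd.
  destruct (eps_ok a0 b0) as [e0 [He0 Ho0]].
  destruct (eps_ok a1 b1) as [e1 [He1 Ho1]].
  set (e := Rmin (Rmin e0 e1) (1/3)).
  assert (He : 0 < e) by (unfold e; repeat apply Rmin_pos; lra).
  destruct (nat_large (1 / e)) as [N0 HN0].
  exists N0. intros n Hn.
  assert (Hinv : 0 < 1 / e) by (apply Rdiv_lt_0_compat; lra).
  assert (HSn : 1 / e < INR (S n)) by (eapply Rlt_le_trans; [exact HN0|]; apply le_INR; lia).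
  assert (Hhe : hstep n < e).
  { unfold hstep. assert (0 < INR (S n)) by lra.
    apply (Rmult_lt_reg_r (INR (S n))); auto. rewrite Rinv_l by lra.
    apply (Rmult_lt_compat_l e) in HSn; auto. unfold Rdiv in HSn. rewrite Rmult_1_l, Rinv_r in HSn by lra. lra. }
  assert (He3 : e <= 1/3) by apply Rmin_r.
  assert (Hn2 : (2 <= n)%nat).
  { assert (3 <= 1 / e).
    { apply (Rmult_le_reg_r e); auto. unfold Rdiv. rewrite Rmult_1_l, Rinv_l by lra. lra. }
    assert (INR 3 < INR (S n)) by (replace (INR 3) with 3 by (simpl; ring); lra).
    apply INR_lt in H0. lia. }
  destruct (grid n ltac:(lia)) as [Hh H1].
  assert (Hee0 : e <= e0) by (unfold e; eapply Rle_trans; [apply Rmin_l|apply Rmin_l]).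
  assert (Hee1 : e <= e1) by (unfold e; eapply Rle_trans; [apply Rmin_l|apply Rmin_r]).
  destruct (ratio_ok a0 b0 (hstep n) ltac:(lra) (Ho0 (hstep n) ltac:(lra))) as [R0 [P0 _]].
  destruct (ratio_ok a1 b1 (hstep n) ltac:(lra) (Ho1 (hstep n) ltac:(lra))) as [_ [_ R1]].
  destruct (Hwd n ltac:(lia)) as [HD1 [HD0 HE0]].
  assert (Hsh : 0 < sqrt (hstep n)) by (apply sqrt_lt_R0; auto).
  set (E := fun v => exists t, rho <= t <= T /\
              v = PC21_norm (fun x => xi x t) (fun x => xix x t) (fun x => xixx x t)).
  assert (Ht0 : rho <= rho <= T) by lra.
  destruct (Rbar_lub E) as [M| |] eqn:ES.
  - assert (HtM : forall t, rho <= t <= T ->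
       Rbar_le (PC21_norm (fun x => xi x t) (fun x => xix x t) (fun x => xixx x t)) (Finite M)).
    { intros t Ht. rewrite <- ES. apply lub_ge. exists t. auto. }
    assert (HM : 0 <= M).
    { pose proof (Rbar_le_trans _ _ _ (PC21_norm_nonneg _ _ _ (HPC rho Ht0)) (HtM rho Ht0)). simpl in H. auto. }
    simpl Rbar_mult.
    destruct (Lub_Rbar_correct (fun v => exists t, rho <= t <= T /\
           v = norm2d n (fun i =>
                 Rsample n (Pop theta sigma lambda phi
                         (fun x => xi x t) (fun x => xix x t)
                         (fun x => xixx x t)) i
               - Pn_apply theta sigma lambda phi a0 b0 a1 b1 n
                   (Rsample n (fun x => xi x t)) i
               - Bn theta a1 b1 n i * (a1 * xix 1 t + b1 * xi 1 t)))) as [_ Hlub].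
    apply Hlub. intros v [t [Ht ->]]. simpl.
    pose proof (get_bounds _ _ _ M (HPC t Ht) (HtM t Ht)) as HB.
    assert (Hbk : forall u, 0 <= u <= 1 -> ~ diff01 (fun y => xixx y t) u -> exists k, (k < K)%nat /\ u = b k).
    { intros u Hu Hn'. apply HbK. apply (Hnd t Ht u Hu Hn'). }
    pose proof (norm_bound theta sigma lambda phi a0 b0 a1 b1 n (fun x => xi x t) (fun x => xix x t)
        (fun x => xixx x t) M Bc Bp b K Hn2 HBc Hts HBp Hp (HPC t Ht) HB (HBC t Ht) HD0 HE0 HD1 R0 P0 R1 Hbk) as NB.
    unfold Err in NB. cbv beta in NB.
    eapply Rle_trans. exact NB. fold C0.
    assert (0 <= sqrt (hstep n) * M) by (apply Rmult_le_pos; lra).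
    replace (C0 * sqrt (hstep n) * M) with (C0 * (sqrt (hstep n) * M)) by ring.
    replace ((C0 + 1) * sqrt (hstep n) * M) with ((C0 + 1) * (sqrt (hstep n) * M)) by ring.
    apply Rmult_le_compat_r; lra.
  - rewrite mult_pinf by (apply Rmult_lt_0_compat; lra).
    destruct (Lub_Rbar _); simpl; auto.
  - exfalso. assert (X : E (PC21_norm (fun x => xi x rho) (fun x => xix x rho) (fun x => xixx x rho))) by (exists rho; auto).
    pose proof (lub_ge E _ X) as Y. rewrite ES in Y.
    pose proof (Rbar_le_trans _ _ _ (PC21_norm_nonneg _ _ _ (HPC rho Ht0)) Y). simpl in H. auto.
Qed.
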